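(* For $i=1,2$ let $f_i\colon[a_i,b_i]\to(0,\infty)$ be smooth, let $x$ be a $C^1$ function, and consider on $[a_i,b_i]\times\mathbb S^2$ the initial data $g_i=ds^2+f_i(s)^2\gamma_*$, $K_i=x'(f_i(s))ds^2+x(f_i(s))f_i(s)\gamma_*$, with energy density $\mu_i$. Assume (i) $\mu_i>0$ on $[a_i,b_i]$ for $i=1,2$; (ii) $f_1(b_1)<f_2(a_2)$; (iii) $0<f_1'(b_1)<\sqrt{1+x(f_1(b_1))^2+2x(f_1(b_1))x'(f_1(b_1))f_1(b_1)}$; (iv) $f_2'(a_2)\le f_1'(b_1)$; (v) $G_x$ is monotone non-decreasing on $[f_1(b_1),f_2(a_2)]$. Then, after an appropriate translation of the interval $[a_2,b_2]$ (so that $b_1\le a_2$), there exists a smooth positive function $f\colon[a_1,b_2]\to(0,\infty)$ such that (I) $f=f_1$ on $[a_1,\frac{a_1+b_1}2]$, (II) $f=f_2$ on $[\frac{a_2+b_2}2,b_2]$, and (III) the initial data set on $[a_1,b_2]\times\mathbb S^2$ given by $g=ds^2+f(s)^2\gamma_*$, $K=x'(f(s))ds^2+x(f(s))f(s)\gamma_*$ has energy density $\mu_f>0$ on $[a_1,b_2]$.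
   Context: $\gamma_*$ denotes the standard round metric on $\mathbb S^2$. Energy density of an initial data set: $\mu=\tfrac12(R(g)+(\operatorname{tr}_gK)^2-|K|^2_g)$. $G_x(r)=x(r)^2+2x(r)x'(r)r$. *)

(* Defs.v *)
From Stdlib Require Import Reals.
From Coquelicot Require Import Coquelicot.
Open Scope R_scope.

Definition smooth (f : R -> R) : Prop :=
  forall (n : nat) (s : R), ex_derive_n f n s.

(* x is C^1 on (0, +oo), the range where it is evaluated (r = f(s) > 0). *)
Definition C1_pos (x : R -> R) : Prop :=
  forall r, 0 < r -> ex_derive x r /\ continuous (Derive x) r.

Definition G (x : R -> R) (r : R) : R :=
  x r ^ 2 + 2 * x r * Derive x r * r.

(* Energy density mu = 1/2 (R(g) + (tr_g K)^2 - |K|_g^2) of the initial data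
   g = ds^2 + f(s)^2 gamma_*, K = x'(f) ds^2 + x(f) f gamma_* on I x S^2,
   written out explicitly.  With
     R(g) = 2 (1 - f'^2)/f^2 - 4 f''/f,
     tr_g K = x'(f) + 2 x(f)/f,   |K|^2 = x'(f)^2 + 2 x(f)^2/f^2,
   one gets
     mu = (1 - f'^2 + x(f)^2 + 2 x(f) x'(f) f - 2 f f'') / f^2. *)
Definition mu (x f : R -> R) (s : R) : R :=
  let r := f s in
  (1 - (Derive f s) ^ 2 + x r ^ 2 + 2 * x r * Derive x r * r
     - 2 * r * Derive_n f 2 s) / r ^ 2.

(* Main.v *)
Require Import Defs.
From Stdlib Require Import Reals Lra Psatz FunctionalExtensionality List.
From Coquelicot Require Import Coquelicot.
Open Scope R_scope.

Lemma smooth_closed (P : (R -> R) -> Prop) :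
  (forall g, P g -> (forall s, ex_derive g s) /\ P (Derive g)) ->
  forall f, P f -> smooth f.
Proof.
  intros HP f Pf.
  assert (H : forall n, P (Derive_n f n)).
  { induction n. exact Pf. apply HP in IHn. destruct IHn as [_ IH]. exact IH. }
  intros n s; destruct n as [|n]; [exact I|]. simpl. apply (HP _ (H n)).
Qed.

Lemma smooth_ex_derive f s : smooth f -> ex_derive f s.
Proof. intros H. exact (H 1%nat s). Qed.

Lemma smooth_Derive f : smooth f -> smooth (Derive f).
Proof.
  intros H n s. destruct n as [|n]; [exact I|]. simpl.
  apply ex_derive_ext with (f := Derive_n (Derive_n f 1) n).
  - intros y. reflexivity.
  - generalize (H (S (S n)) s). simpl.
    apply ex_derive_ext. intros y. rewrite (Derive_n_comp f n 1). rewrite Nat.add_1_r. reflexivity.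
Qed.

Lemma smooth_cont f s : smooth f -> continuous f s.
Proof. intros H. apply (@ex_derive_continuous R_AbsRing R_NormedModule). apply smooth_ex_derive, H. Qed.

Lemma smooth_ext f g : (forall s, f s = g s) -> smooth f -> smooth g.
Proof. intros E H. replace g with f. exact H. apply functional_extensionality, E. Qed.

Lemma smooth_const c : smooth (fun _ => c).
Proof.
  apply (smooth_closed (fun h => exists c, h = fun _ => c)); [|now exists c].
  intros g [c' ->]. split. intros; apply ex_derive_const.
  exists 0. apply functional_extensionality. intros s. apply Derive_const.
Qed.

Definition sp (l : list ((R -> R) * (R -> R))) (s : R) : R :=
  fold_right (fun pq acc => fst pq s * snd pq s + acc) 0 l.
Definition dl (l : list ((R -> R) * (R -> R))) :=
  flat_map (fun pq => (Derive (fst pq), snd pq) :: (fst pq, Derive (snd pq)) :: nil) l.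

Lemma sp_derive (l : list ((R -> R) * (R -> R))) (s : R) : List.Forall (fun pq => smooth (fst pq) /\ smooth (snd pq)) l ->
  is_derive (sp l) s (sp (dl l) s).
Proof.
  induction l as [|[p q] l IH]; intros HF.
  - simpl. apply (is_derive_const 0).
  - inversion HF as [|? ? [Hp Hq] HF']; subst.
    replace (sp (dl ((p, q) :: l)) s) with
      ((Derive p s * q s + p s * Derive q s) + sp (dl l) s)
      by (unfold sp, dl; simpl; ring).
    apply is_derive_ext with (f := fun s => p s * q s + sp l s).
    { intros; reflexivity. }
    apply (is_derive_plus (fun s => p s * q s) (sp l)); [|apply IH, HF'].
    apply (is_derive_mult p q). apply Derive_correct, smooth_ex_derive, Hp.
    apply Derive_correct, smooth_ex_derive, Hq. intros; apply Rmult_comm.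
Qed.

Lemma sp_smooth (l : list ((R -> R) * (R -> R))) : List.Forall (fun pq => smooth (fst pq) /\ smooth (snd pq)) l -> smooth (sp l).
Proof.
  intros H.
  apply (smooth_closed (fun h => exists l, List.Forall (fun pq => smooth (fst pq) /\ smooth (snd pq)) l /\ h = sp l)); [|eauto].
  intros g [l' [HF ->]]. split.
  - intros s. eexists. apply sp_derive, HF.
  - exists (dl l'). split.
    + induction l' as [|[p q] l' IH]. constructor.
      inversion HF as [|? ? [Hp Hq] HF']; subst. simpl.
      constructor. split; [apply smooth_Derive, Hp|exact Hq].
      constructor. split; [exact Hp|apply smooth_Derive, Hq]. apply IH, HF'.
    + apply functional_extensionality. intros s. apply is_derive_unique, sp_derive, HF.
Qed.

Lemma smooth_mult f g : smooth f -> smooth g -> smooth (fun s => f s * g s).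
Proof.
  intros Hf Hg. apply (smooth_ext (sp ((f, g) :: nil))).
  intros s. unfold sp; simpl; ring.
  apply sp_smooth. constructor; [split; assumption|constructor].
Qed.

Lemma smooth_plus f g : smooth f -> smooth g -> smooth (fun s => f s + g s).
Proof.
  intros Hf Hg. apply (smooth_ext (sp ((f, fun _ => 1) :: (g, fun _ => 1) :: nil))).
  intros s. unfold sp; simpl; ring.
  apply sp_smooth. repeat constructor; simpl; auto using smooth_const.
Qed.

Lemma smooth_scal k f : smooth f -> smooth (fun s => k * f s).
Proof. intros; apply smooth_mult; auto using smooth_const. Qed.

Lemma smooth_opp f : smooth f -> smooth (fun s => - f s).
Proof. intros H; apply (smooth_ext (fun s => (-1) * f s)). intros; ring. now apply smooth_scal. Qed.

Lemma smooth_minus f g : smooth f -> smooth g -> smooth (fun s => f s - g s).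
Proof. intros; apply smooth_plus; auto using smooth_opp. Qed.

Lemma smooth_affine_comp f a b : smooth f -> smooth (fun s => f (a * s + b)).
Proof.
  intros Hf.
  apply (smooth_closed (fun h => exists g k, smooth g /\ h = fun s => k * g (a * s + b))).
  2:{ exists f, 1. split; auto. apply functional_extensionality; intros; ring. }
  intros h [g [k [Hg ->]]].
  assert (D : forall s, is_derive (fun s => k * g (a * s + b)) s (k * (a * Derive g (a * s + b)))).
  { intros s. apply (is_derive_scal (fun s => g (a * s + b))).
    apply (is_derive_comp g (fun s => a * s + b)).
    apply Derive_correct, smooth_ex_derive, Hg.
    auto_derive; auto; ring. }
  split. intros s; eexists; apply D.
  exists (Derive g), (k * a). split. apply smooth_Derive, Hg.
  apply functional_extensionality; intros s. transitivity (k * (a * Derive g (a * s + b))). apply is_derive_unique, D. ring.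
Qed.

Lemma smooth_id : smooth (fun s => s).
Proof.
  apply (smooth_closed (fun h => h = (fun s => s) \/ exists c, h = fun _ => c)); [|now left].
  intros g [->|[c ->]].
  - split. intros; apply ex_derive_id. right; exists 1.
    apply functional_extensionality; intros; apply Derive_id.
  - split. intros; apply ex_derive_const. right; exists 0.
    apply functional_extensionality; intros; apply Derive_const.
Qed.

Lemma antideriv g : smooth g -> exists F, smooth F /\ forall s, is_derive F s (g s).
Proof.
  intros Hg.
  assert (D : forall s, is_derive (fun s => RInt g 0 s) s (g s)).
  { intros s. apply (is_derive_RInt g (fun s => RInt g 0 s) 0 s); [|apply smooth_cont, Hg].
    exists (mkposreal 1 Rlt_0_1). intros y _. apply (@RInt_correct R_CompleteNormedModule).
    apply (@ex_RInt_continuous R_CompleteNormedModule). intros; apply smooth_cont, Hg. }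
  exists (fun s => RInt g 0 s). split; auto.
  apply (smooth_closed (fun h => h = (fun s => RInt g 0 s) \/ smooth h)); [|now left].
  intros h [->|Hh].
  - split. intros s; eexists; apply D. right.
    replace (Derive (fun s => RInt g 0 s)) with g. exact Hg.
    apply functional_extensionality; intros s; symmetry; apply is_derive_unique, D.
  - split. intros; apply smooth_ex_derive, Hh. right; apply smooth_Derive, Hh.
Qed.

Lemma locally_R x (P : R -> Prop) :
  (exists d, 0 < d /\ forall y, Rabs (y - x) < d -> P y) -> locally x P.
Proof. intros [d [Hd H]]. exists (mkposreal d Hd). intros y Hy. apply H. exact Hy. Qed.

Lemma locally_R' x (P : R -> Prop) :
  locally x P -> exists d, 0 < d /\ forall y, Rabs (y - x) < d -> P y.
Proof. intros [d H]. exists d. split. apply cond_pos. intros y Hy. apply H. exact Hy. Qed.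

Lemma cont_eps f x : continuous f x ->
  forall e, 0 < e -> exists d, 0 < d /\ forall y, Rabs (y - x) < d -> Rabs (f y - f x) < e.
Proof.
  intros Hc e He. apply continuity_pt_filterlim in Hc.
  apply (proj1 (continuity_pt_locally f x)) with (eps := mkposreal e He) in Hc.
  apply locally_R' in Hc. exact Hc.
Qed.

Lemma mvt f df a b : (forall s, is_derive f s (df s)) -> a <= b ->
  exists c, a <= c <= b /\ f b - f a = df c * (b - a).
Proof.
  intros D Hab. destruct (MVT_gen f a b df) as [c [Hc E]].
  - intros; apply D.
  - intros x _. apply derivable_continuous_pt. exists (df x).
    apply is_derive_Reals, D.
  - exists c. rewrite Rmin_left, Rmax_right in Hc by lra. auto.
Qed.

Lemma deriv_bound f df a b M : (forall s, is_derive f s (df s)) -> a <= b ->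
  (forall s, a <= s <= b -> Rabs (df s) <= M) -> Rabs (f b - f a) <= M * (b - a).
Proof.
  intros D Hab HM. destruct (mvt f df a b D Hab) as [c [Hc ->]].
  rewrite Rabs_mult, (Rabs_pos_eq (b - a)) by lra.
  apply Rmult_le_compat_r. lra. apply HM, Hc.
Qed.

Lemma deriv_nonneg f df a b : (forall s, is_derive f s (df s)) -> a <= b ->
  (forall s, a <= s <= b -> 0 <= df s) -> f a <= f b.
Proof.
  intros D Hab HM. destruct (mvt f df a b D Hab) as [c [Hc E]].
  assert (0 <= df c * (b - a)) by (apply Rmult_le_pos; [apply HM, Hc|lra]). lra.
Qed.

Lemma deriv_zero f df a b : (forall s, is_derive f s (df s)) -> a <= b ->
  (forall s, a <= s <= b -> df s = 0) -> f a = f b.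
Proof.
  intros D Hab HM. destruct (mvt f df a b D Hab) as [c [Hc E]].
  rewrite HM in E by exact Hc. lra.
Qed.

Lemma isd_const (c s : R) : is_derive (fun _ => c) s 0.
Proof. auto_derive; auto. Qed.
Lemma isd_id (s : R) : is_derive (fun u => u) s 1.
Proof. auto_derive; auto. Qed.

Inductive Poly : (R -> R) -> Prop :=
| Pconst c : Poly (fun _ => c)
| Pid : Poly (fun u => u)
| Pplus p q : Poly p -> Poly q -> Poly (fun u => p u + q u)
| Pmult p q : Poly p -> Poly q -> Poly (fun u => p u * q u).

Lemma Poly_deriv p : Poly p -> exists p', Poly p' /\ forall u, is_derive p u (p' u).
Proof.
  induction 1 as [c| |p q _ [p' [Hp Dp]] _ [q' [Hq Dq]]|p q Hp0 [p' [Hp Dp]] Hq0 [q' [Hq Dq]]].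
  - exists (fun _ => 0). split. constructor. intros; apply isd_const.
  - exists (fun _ => 1). split. constructor. intros; apply isd_id.
  - exists (fun u => p' u + q' u). split. now constructor.
    intros u. apply (is_derive_plus p q); auto.
  - exists (fun u => p' u * q u + p u * q' u). split. repeat constructor; auto.
    intros u. apply (is_derive_mult p q); auto. intros; apply Rmult_comm.
Qed.

Lemma Poly_bound p : Poly p -> exists C N, 0 <= C /\ forall u, 0 <= u -> Rabs (p u) <= C * (1 + u) ^ N.
Proof.
  induction 1 as [c| |p q _ [C1 [N1 [HC1 B1]]] _ [C2 [N2 [HC2 B2]]]|p q _ [C1 [N1 [HC1 B1]]] _ [C2 [N2 [HC2 B2]]]].
  - exists (Rabs c), 0%nat. split. apply Rabs_pos. intros; simpl; lra.
  - exists 1, 1%nat. split. lra. intros u Hu. rewrite Rabs_pos_eq by lra. simpl. lra.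
  - exists (C1 + C2), (N1 + N2)%nat. split. lra. intros u Hu.
    assert (A1 : (1 + u) ^ N1 <= (1 + u) ^ (N1 + N2)) by (apply Rle_pow; [lra|lia]).
    assert (A2 : (1 + u) ^ N2 <= (1 + u) ^ (N1 + N2)) by (apply Rle_pow; [lra|lia]).
    eapply Rle_trans. apply Rabs_triang.
    specialize (B1 u Hu). specialize (B2 u Hu). nra.
  - exists (C1 * C2), (N1 + N2)%nat. split. nra. intros u Hu.
    rewrite Rabs_mult, pow_add.
    specialize (B1 u Hu). specialize (B2 u Hu).
    assert (0 <= Rabs (p u)) by apply Rabs_pos. assert (0 <= Rabs (q u)) by apply Rabs_pos.
    assert (0 <= (1+u)^N1) by (apply pow_le; lra).
    assert (0 <= (1+u)^N2) by (apply pow_le; lra).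
    apply Rle_trans with ((C1 * (1 + u) ^ N1) * Rabs (q u)).
    apply Rmult_le_compat_r; auto.
    replace (C1 * C2 * ((1 + u) ^ N1 * (1 + u) ^ N2)) with ((C1 * (1 + u) ^ N1) * (C2 * (1 + u) ^ N2)) by ring.
    apply Rmult_le_compat_l; auto. nra.
Qed.

Lemma exp_mul_nat (m : nat) y : exp (INR m * y) = exp y ^ m.
Proof.
  induction m. simpl. rewrite Rmult_0_l. apply exp_0.
  rewrite S_INR. replace ((INR m + 1) * y) with (INR m * y + y) by ring.
  rewrite exp_plus, IHm. simpl. ring.
Qed.

Lemma exp_ge_pow (m : nat) u : (1 <= m)%nat -> 0 <= u -> ((1 + u) / INR m) ^ m <= exp u.
Proof.
  intros Hm Hu. assert (HM : 1 <= INR m) by (apply (le_INR 1); lia).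
  replace u with (INR m * (u / INR m)) at 2 by (field; lra).
  rewrite exp_mul_nat. apply pow_incr. split.
  apply Rmult_le_pos; [lra|]. left; apply Rinv_0_lt_compat; lra.
  apply Rle_trans with (1 + u / INR m). 2: apply exp_ineq1_le.
  unfold Rdiv. rewrite Rmult_plus_distr_r.
  assert (/ INR m <= 1). { rewrite <- Rinv_1. apply Rinv_le_contravar; lra. } lra.
Qed.

Lemma Poly_decay q : Poly q -> forall e, 0 < e -> exists d, 0 < d /\
  forall h, 0 < h < d -> Rabs (q (/ h) * exp (- / h)) <= e * h.
Proof.
  intros Hq e He. destruct (Poly_bound q Hq) as [C [N [HC B]]].
  set (m := (N + 2)%nat). set (K := C * INR m ^ m).
  assert (Hm : 1 <= INR m) by (apply (le_INR 1); unfold m; lia).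
  assert (HK : 0 <= K) by (unfold K; apply Rmult_le_pos; auto; apply pow_le; lra).
  exists (e / (K + 1)). split. apply Rdiv_lt_0_compat; lra.
  intros h [Hh Hhd]. set (u := / h).
  assert (Hu : 0 < u) by (apply Rinv_0_lt_compat; lra).
  assert (Hhu : h = / u) by (unfold u; rewrite Rinv_inv; reflexivity).
  rewrite Rabs_mult, (Rabs_pos_eq (exp _)) by (left; apply exp_pos).
  assert (E1 := exp_ge_pow m u ltac:(unfold m; lia) ltac:(lra)).
  assert (Bu := B u ltac:(lra)).
  rewrite exp_Ropp.
  assert (Hpos : 0 < ((1 + u) / INR m) ^ m) by (apply pow_lt; apply Rdiv_lt_0_compat; lra).
  assert (Hexp : / exp u <= / (((1 + u) / INR m) ^ m)) by (apply Rinv_le_contravar; auto).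
  assert (Hq0 : 0 <= Rabs (q u)) by apply Rabs_pos.
  apply Rle_trans with (C * (1 + u) ^ N * / (((1 + u) / INR m) ^ m)).
  { apply Rmult_le_compat; auto. left; apply Rinv_0_lt_compat, exp_pos. }
  assert (E2 : C * (1 + u) ^ N * / (((1 + u) / INR m) ^ m) = K / (1 + u) ^ 2).
  { unfold Rdiv. rewrite Rpow_mult_distr. rewrite pow_inv. unfold K, m. rewrite pow_add.
    field. repeat split; try apply pow_nonzero; unfold m in Hm; lra. }
  rewrite E2.
  assert (Hd : h * (K + 1) < e). { apply (Rmult_lt_compat_r (K+1)) in Hhd; [|lra].
    unfold Rdiv in Hhd. rewrite Rmult_assoc, Rinv_l in Hhd by lra. lra. }
  rewrite Hhu in Hd |- *.
  assert (Hiu : 0 < / u) by (apply Rinv_0_lt_compat; lra).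
  apply Rle_trans with (K * (/ u * / u)).
  { unfold Rdiv. apply Rmult_le_compat_l; auto. rewrite <- Rinv_mult.
    apply Rinv_le_contravar. nra. nra. }
  assert (K * / u <= e) by nra. nra.
Qed.

Definition phq (q : R -> R) (s : R) : R :=
  if Rlt_dec 0 s then q (/ s) * exp (- / s) else 0.

Lemma phq_deriv q : Poly q -> exists q2, Poly q2 /\ forall s, is_derive (phq q) s (phq q2 s).
Proof.
  intros Hq. destruct (Poly_deriv q Hq) as [q' [Hq' Dq']].
  exists (fun u => u * u * (q u + (-1) * q' u)). split.
  { repeat constructor; auto. }
  intros s. destruct (Rtotal_order s 0) as [Hs|[Hs|Hs]].
  -
    unfold phq at 2. destruct (Rlt_dec 0 s); [lra|].
    apply (is_derive_ext_loc (fun _ => 0)); [|apply isd_const].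
    apply locally_R. exists (- s). split. lra. intros y Hy.
    unfold phq. destruct (Rlt_dec 0 y); auto.
    apply Rabs_def2 in Hy. lra.
  -
    subst s. unfold phq at 2. destruct (Rlt_dec 0 0); [lra|].
    apply is_derive_Reals. intros eps Heps.
    destruct (Poly_decay q Hq (eps / 2)) as [d [Hd Hdec]]. lra.
    exists (mkposreal d Hd). intros h Hh0 Hhd. simpl in Hhd.
    rewrite Rplus_0_l. unfold phq. destruct (Rlt_dec 0 0); [lra|].
    destruct (Rlt_dec 0 h) as [Hh|Hh].
    + rewrite Rabs_pos_eq in Hhd by lra.
      specialize (Hdec h (conj Hh Hhd)).
      rewrite Rminus_0_r, Rminus_0_r. unfold Rdiv. rewrite Rabs_mult.
      rewrite (Rabs_pos_eq (/ h)) by (left; apply Rinv_0_lt_compat; lra).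
      apply Rle_lt_trans with (eps / 2 * h * / h).
      apply Rmult_le_compat_r. left; apply Rinv_0_lt_compat; lra. exact Hdec.
      field_simplify; lra.
    + replace ((0 - 0) / h - 0) with 0 by (field; lra). rewrite Rabs_R0. lra.
  -
    unfold phq at 2. destruct (Rlt_dec 0 s); [|lra].
    apply (is_derive_ext_loc (fun y => q (/ y) * exp (- / y))).
    { apply locally_R. exists s. split. lra. intros y Hy.
      unfold phq. destruct (Rlt_dec 0 y); auto. apply Rabs_def2 in Hy. lra. }
    assert (D1 : is_derive (fun y => / y) s (- (/ s * / s))).
    { auto_derive. lra. field. lra. }
    assert (D2 : is_derive (fun y => q (/ y)) s (- (/ s * / s) * q' (/ s))).
    { apply (is_derive_comp q (fun y => / y)); auto. }
    assert (D3 : is_derive (fun y => exp (- / y)) s (exp (- / s) * (/ s * / s))).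
    { auto_derive. lra. field. lra. }
    replace (/ s * / s * (q (/ s) + -1 * q' (/ s)) * exp (- / s)) with
      ((- (/ s * / s) * q' (/ s)) * exp (- / s) + q (/ s) * (exp (- / s) * (/ s * / s))) by ring.
    apply (is_derive_mult (fun y => q (/ y)) (fun y => exp (- / y))); auto.
    intros; apply Rmult_comm.
Qed.

Lemma phq_smooth q : Poly q -> smooth (phq q).
Proof.
  intros Hq.
  apply (smooth_closed (fun g => exists q, Poly q /\ g = phq q)); [|eauto].
  intros g [q0 [Hq0 ->]]. destruct (phq_deriv q0 Hq0) as [q2 [Hq2 D]].
  split. intros s; eexists; apply D.
  exists q2. split; auto. apply functional_extensionality; intros s.
  apply is_derive_unique, D.
Qed.

Definition phi := phq (fun _ => 1).

Lemma phi_smooth : smooth phi.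
Proof. apply phq_smooth. constructor. Qed.

Lemma phi_zero s : s <= 0 -> phi s = 0.
Proof. intros H. unfold phi, phq. destruct (Rlt_dec 0 s); auto. lra. Qed.

Lemma phi_pos s : 0 < s -> 0 < phi s.
Proof. intros H. unfold phi, phq. destruct (Rlt_dec 0 s); [|lra]. rewrite Rmult_1_l. apply exp_pos. Qed.

Lemma phi_nonneg s : 0 <= phi s.
Proof. destruct (Rlt_dec 0 s). left; now apply phi_pos. rewrite phi_zero; lra. Qed.

Definition psi (s : R) := phi s * phi (-1 * s + 1).

Lemma psi_smooth : smooth psi.
Proof. apply smooth_mult. apply phi_smooth. apply smooth_affine_comp, phi_smooth. Qed.

Lemma psi_nonneg s : 0 <= psi s.
Proof. unfold psi. apply Rmult_le_pos; apply phi_nonneg. Qed.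

Lemma psi_zero s : s <= 0 \/ 1 <= s -> psi s = 0.
Proof. unfold psi. intros [H|H]. rewrite phi_zero; [ring|lra]. rewrite (phi_zero (-1 * s + 1)); [ring|lra]. Qed.

Lemma psi_pos s : 0 < s < 1 -> 0 < psi s.
Proof. intros H. unfold psi. apply Rmult_lt_0_compat; apply phi_pos; lra. Qed.

Lemma step_exists : exists H : R -> R, smooth H /\
  (forall s, s <= 0 -> H s = 0) /\ (forall s, 1 <= s -> H s = 1) /\
  (forall s s', s <= s' -> H s <= H s') /\ 0 < H (1/2).
Proof.
  destruct (antideriv psi psi_smooth) as [P [HPs DP]].
  assert (Mono : forall a b, a <= b -> P a <= P b).
  { intros a b Hab. apply (deriv_nonneg P psi); auto. intros; apply psi_nonneg. }
  assert (Z0 : forall s, s <= 0 -> P s = P 0).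
  { intros s Hs. apply (deriv_zero P psi); auto. intros; apply psi_zero; lra. }
  assert (Z1 : forall s, 1 <= s -> P s = P 1).
  { intros s Hs. symmetry. apply (deriv_zero P psi); auto. intros; apply psi_zero; lra. }
  assert (Pos : P 0 < P (1/2)).
  { destruct (mvt P psi (1/4) (1/2) DP ltac:(lra)) as [c [Hc E]].
    assert (0 < psi c) by (apply psi_pos; lra).
    assert (P 0 <= P (1/4)) by (apply Mono; lra). nra. }
  assert (Pos1 : P (1/2) <= P 1) by (apply Mono; lra).
  exists (fun s => (P s - P 0) / (P 1 - P 0)). repeat split.
  - apply (smooth_ext (fun s => / (P 1 - P 0) * (P s + - P 0))).
    intros; unfold Rdiv; ring.
    apply smooth_scal, smooth_plus; auto using smooth_const.
  - intros s Hs. rewrite Z0 by lra. unfold Rdiv; ring.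
  - intros s Hs. rewrite Z1 by lra. field. lra.
  - intros s s' H. apply Rmult_le_compat_r. left; apply Rinv_0_lt_compat; lra.
    apply Mono in H. lra.
  - apply Rdiv_lt_0_compat; lra.
Qed.

Lemma abs_le_e a b : Rabs a <= b -> -b <= a <= b.
Proof. unfold Rabs; destruct (Rcase_abs a); intros; lra. Qed.
Lemma abs_lt_e a b : Rabs a < b -> -b < a < b.
Proof. unfold Rabs; destruct (Rcase_abs a); intros; lra. Qed.
Lemma abs_le_i a b : -b <= a <= b -> Rabs a <= b.
Proof. unfold Rabs; destruct (Rcase_abs a); intros; lra. Qed.
Lemma abs_lt_i a b : -b < a < b -> Rabs a < b.
Proof. unfold Rabs; destruct (Rcase_abs a); intros; lra. Qed.

Lemma cmult (f g : R -> R) r : continuous f r -> continuous g r -> continuous (fun y => f y * g y) r.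
Proof. intros; apply (@continuous_mult R_UniformSpace R_AbsRing f g r); auto. Qed.
Lemma cplus (f g : R -> R) r : continuous f r -> continuous g r -> continuous (fun y => f y + g y) r.
Proof. intros; apply (@continuous_plus R_UniformSpace R_AbsRing R_NormedModule f g r); auto. Qed.
Lemma cconst (c r : R) : continuous (fun _ : R => c) r.
Proof. apply (@continuous_const R_UniformSpace R_UniformSpace). Qed.
Lemma cid (r : R) : continuous (fun y : R => y) r.
Proof. apply (@continuous_id R_UniformSpace). Qed.

Lemma G_cont x r : C1_pos x -> 0 < r -> continuous (G x) r.
Proof.
  intros H Hr. destruct (H r Hr) as [Hd Hc].
  assert (Cx : continuous x r) by (apply (@ex_derive_continuous R_AbsRing R_NormedModule); auto).
  unfold G. apply cplus.
  - simpl. apply cmult; auto. apply cmult; auto. apply cconst.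
  - apply cmult; [|apply cid]. apply cmult; auto. apply cmult; auto. apply cconst.
Qed.

Definition Phi x r v k := 1 - v ^ 2 + G x r - 2 * r * k.

Lemma mu_eq x f s : mu x f s = Phi x (f s) (Derive f s) (Derive_n f 2 s) / (f s) ^ 2.
Proof. unfold mu, Phi, G. simpl. unfold Rdiv. f_equal. ring. Qed.

Lemma mu_pos_iff x f s : 0 < f s -> 0 < Phi x (f s) (Derive f s) (Derive_n f 2 s) -> 0 < mu x f s.
Proof. intros H1 H2. rewrite mu_eq. apply Rdiv_lt_0_compat; auto. apply pow_lt; auto. Qed.

Lemma Phi_pos_of_mu x f s : 0 < f s -> 0 < mu x f s -> 0 < Phi x (f s) (Derive f s) (Derive_n f 2 s).
Proof.
  intros H1 H2. rewrite mu_eq in H2. assert (0 < f s ^ 2) by (apply pow_lt; auto).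
  unfold Rdiv in H2. apply Rmult_lt_reg_r with (/ f s ^ 2). apply Rinv_0_lt_compat; auto. lra.
Qed.

Lemma Phi_affine x r v k h : Phi x r v ((1 - h) * k) = (1 - h) * Phi x r v k + h * Phi x r v 0.
Proof. unfold Phi. ring. Qed.

Lemma abs_prod_bound a b A B : Rabs a <= A -> Rabs b <= B -> Rabs (a * b) <= A * B.
Proof. intros. rewrite Rabs_mult. apply Rmult_le_compat; auto; apply Rabs_pos. Qed.

Lemma Phi_nbhd x r0 v0 k0 : C1_pos x -> 0 < r0 -> 0 < Phi x r0 v0 k0 ->
  exists d, 0 < d /\ forall r v k, Rabs (r - r0) < d -> Rabs (v - v0) < d -> Rabs (k - k0) < d ->
  0 < Phi x r v k.
Proof.
  intros Hx Hr0 HP. set (P0 := Phi x r0 v0 k0) in *.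
  destruct (cont_eps (G x) r0 (G_cont x r0 Hx Hr0) (P0 / 3)) as [dG [HdG HG]]. lra.
  assert (A1 : 0 < 2 * Rabs v0 + 1) by (generalize (Rabs_pos v0); lra).
  assert (A2 : 0 < Rabs k0 + 1 + r0) by (generalize (Rabs_pos k0); lra).
  exists (Rmin (Rmin 1 dG) (Rmin (P0 / (3 * (2 * Rabs v0 + 1))) (P0 / (6 * (Rabs k0 + 1 + r0))))).
  split.
  { repeat apply Rmin_pos; try lra; apply Rdiv_lt_0_compat; lra. }
  intros r v k Hr Hv Hk.
  set (dd := Rmin (Rmin 1 dG) (Rmin (P0 / (3 * (2 * Rabs v0 + 1))) (P0 / (6 * (Rabs k0 + 1 + r0))))) in *.
  assert (D1 : dd <= 1) by (unfold dd; apply Rle_trans with (Rmin 1 dG); apply Rmin_l).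
  assert (D2 : dd <= dG) by (unfold dd; apply Rle_trans with (Rmin 1 dG); [apply Rmin_l|apply Rmin_r]).
  assert (D3 : dd <= P0 / (3 * (2 * Rabs v0 + 1))) by (unfold dd; eapply Rle_trans; [apply Rmin_r|apply Rmin_l]).
  assert (D4 : dd <= P0 / (6 * (Rabs k0 + 1 + r0))) by (unfold dd; eapply Rle_trans; [apply Rmin_r|apply Rmin_r]).
  assert (E3 : dd * (2 * Rabs v0 + 1) <= P0 / 3).
  { apply Rmult_le_compat_r with (r := 2 * Rabs v0 + 1) in D3; [|lra].
    replace (P0 / (3 * (2 * Rabs v0 + 1)) * (2 * Rabs v0 + 1)) with (P0 / 3) in D3 by (field; lra). lra. }
  assert (E4 : dd * (Rabs k0 + 1 + r0) <= P0 / 6).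
  { apply Rmult_le_compat_r with (r := Rabs k0 + 1 + r0) in D4; [|lra].
    replace (P0 / (6 * (Rabs k0 + 1 + r0)) * (Rabs k0 + 1 + r0)) with (P0 / 6) in D4 by (field; lra). lra. }
  assert (HGr : Rabs (G x r - G x r0) < P0 / 3) by (apply HG; lra).
  assert (Bv : Rabs (v + v0) <= 2 * Rabs v0 + 1).
  { replace (v + v0) with ((v - v0) + 2 * v0) by ring. eapply Rle_trans. apply Rabs_triang.
    rewrite Rabs_mult, (Rabs_pos_eq 2) by lra. lra. }
  assert (Sq : Rabs (v ^ 2 - v0 ^ 2) <= dd * (2 * Rabs v0 + 1)).
  { replace (v ^ 2 - v0 ^ 2) with ((v - v0) * (v + v0)) by ring. apply abs_prod_bound; lra. }
  assert (Bk : Rabs k <= Rabs k0 + 1).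
  { replace k with ((k - k0) + k0) by ring. eapply Rle_trans. apply Rabs_triang. lra. }
  assert (Pr : Rabs (r * k - r0 * k0) <= dd * (Rabs k0 + 1 + r0)).
  { replace (r * k - r0 * k0) with ((r - r0) * k + r0 * (k - k0)) by ring.
    eapply Rle_trans. apply Rabs_triang.
    assert (Rabs ((r - r0) * k) <= dd * (Rabs k0 + 1)) by (apply abs_prod_bound; lra).
    assert (Rabs (r0 * (k - k0)) <= r0 * dd) by (rewrite Rabs_mult, Rabs_pos_eq by lra; apply Rmult_le_compat_l; lra).
    lra. }
  apply abs_lt_e in HGr. generalize (abs_le_e _ _ Sq) (abs_le_e _ _ Pr). intros [S1 S2] [P1 P2].
  unfold Phi. unfold P0, Phi in *. lra.
Qed.

Ltac req := match goal with |- ?a = ?b => change (@eq R a b) end.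

Definition is_step (H : R -> R) := smooth H /\ (forall s, s <= 0 -> H s = 0) /\
  (forall s, 1 <= s -> H s = 1) /\ (forall s s', s <= s' -> H s <= H s').

Lemma step_bounds H s : is_step H -> 0 <= H s <= 1.
Proof.
  intros [_ [H0 [H1 Hm]]]. split.
  - rewrite <- (H0 (Rmin s 0)) by apply Rmin_r. apply Hm, Rmin_l.
  - rewrite <- (H1 (Rmax s 1)) by apply Rmax_r. apply Hm, Rmax_l.
Qed.

Lemma solve2 k p a b : smooth k -> exists F F1, smooth F /\ smooth F1 /\
  (forall s, is_derive F s (F1 s)) /\ (forall s, is_derive F1 s (k s)) /\ F p = a /\ F1 p = b.
Proof.
  intros Hk. destruct (antideriv k Hk) as [K1 [HK1 DK1]].
  set (F1 := fun s => K1 s + (b - K1 p)).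
  assert (HF1 : smooth F1) by (apply smooth_plus; auto using smooth_const).
  assert (DF1 : forall s, is_derive F1 s (k s)).
  { intros s. unfold F1. replace (k s) with (k s + 0) by ring. apply (is_derive_plus K1 (fun _ => b - K1 p)); auto. apply isd_const. }
  destruct (antideriv F1 HF1) as [K0 [HK0 DK0]].
  exists (fun s => K0 s + (a - K0 p)), F1.
  split; [apply smooth_plus; auto using smooth_const|].
  split; [exact HF1|].
  split; [intros s; replace (F1 s) with (F1 s + 0) by ring; apply (is_derive_plus K0 (fun _ => a - K0 p)); auto; apply isd_const|].
  split; [exact DF1|].
  split; [simpl; ring|unfold F1; ring].
Qed.

Lemma derivs_id f f1 f2 s : (forall s, is_derive f s (f1 s)) -> (forall s, is_derive f1 s (f2 s)) ->
  Derive f s = f1 s /\ Derive_n f 2 s = f2 s.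
Proof.
  intros D1 D2. split. apply is_derive_unique, D1.
  simpl. rewrite (Derive_ext (fun x => Derive (fun y => f y) x) f1).
  apply is_derive_unique, D2. intros t. apply is_derive_unique, D1.
Qed.

Lemma smooth_derivs f s : smooth f -> is_derive f s (Derive f s) /\ is_derive (Derive f) s (Derive (Derive f) s).
Proof.
  intros H. split. apply Derive_correct, smooth_ex_derive, H.
  apply Derive_correct, smooth_ex_derive, smooth_Derive, H.
Qed.

Lemma deriv_nonpos f df a b : (forall s, is_derive f s (df s)) -> a <= b ->
  (forall s, a <= s <= b -> df s <= 0) -> f b <= f a.
Proof.
  intros D Hab HM. assert (- f a <= - f b); [|lra].
  apply (deriv_nonneg (fun s => - f s) (fun s => - df s)); auto.
  intros s. apply (is_derive_opp f). apply D. intros s Hs. specialize (HM s Hs). lra.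
Qed.

Lemma left_cons f1 H b1 w1 : smooth f1 -> is_step H -> 0 < w1 ->
  exists L L1 kL, smooth L /\ (forall s, is_derive L s (L1 s)) /\ (forall s, is_derive L1 s (kL s)) /\
  (forall s, s <= b1 - w1 -> L s = f1 s /\ L1 s = Derive f1 s /\ kL s = Derive (Derive f1) s) /\
  (forall s, b1 <= s -> kL s = 0 /\ L1 s = L1 b1 /\ L s = L b1 + L1 b1 * (s - b1)) /\
  (forall s, b1 - w1 <= s <= b1 -> exists h, 0 <= h <= 1 /\ kL s = (1 - h) * Derive (Derive f1) s) /\
  (forall M, (forall s, b1 - w1 <= s <= b1 -> Rabs (Derive (Derive f1) s) <= M) ->
     forall s, b1 - w1 <= s <= b1 -> Rabs (L1 s - Derive f1 s) <= M * w1 /\ Rabs (L s - f1 s) <= M * w1 * w1).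
Proof.
  intros Hf1 HH Hw1. set (p := b1 - w1).
  destruct HH as [HHs [HH0 [HH1 HHm]]].
  set (H1 := fun s => H (/ w1 * s + - p / w1)).
  assert (H1s : smooth H1) by (apply smooth_affine_comp; auto).
  assert (H1b : forall s, 0 <= H1 s <= 1) by (intros; unfold H1; apply (step_bounds H); exact (conj HHs (conj HH0 (conj HH1 HHm)))).
  assert (H10 : forall s, s <= p -> H1 s = 0).
  { intros s Hs. apply HH0. replace (/ w1 * s + - p / w1) with ((s - p) / w1) by (field; lra).
    unfold Rdiv. assert (0 < / w1) by (apply Rinv_0_lt_compat; lra). nra. }
  assert (H11 : forall s, b1 <= s -> H1 s = 1).
  { intros s Hs. apply HH1. replace (/ w1 * s + - p / w1) with ((s - p) / w1) by (field; lra).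
    apply (Rmult_le_reg_r w1); auto. unfold Rdiv. rewrite Rmult_assoc, Rinv_l by lra. unfold p. lra. }
  set (f2 := Derive (Derive f1)).
  set (kL := fun s => (1 - H1 s) * f2 s).
  assert (HkL : smooth kL).
  { apply smooth_mult. apply smooth_minus; auto using smooth_const. apply smooth_Derive, smooth_Derive, Hf1. }
  destruct (solve2 kL p (f1 p) (Derive f1 p) HkL) as [L [L1 [HL [HL1 [DL [DL1 [Lp L1p]]]]]]].
  assert (Df1 : forall s, is_derive f1 s (Derive f1 s)) by (intros; apply smooth_derivs, Hf1).
  assert (Df2 : forall s, is_derive (Derive f1) s (f2 s)) by (intros; apply smooth_derivs, Hf1).
  assert (Dg : forall s, is_derive (fun u => L1 u - Derive f1 u) s (- H1 s * f2 s)).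
  { intros s. replace (- H1 s * f2 s) with (kL s - f2 s) by (unfold kL; ring).
    apply (is_derive_minus L1 (Derive f1)); auto. }
  assert (Dh : forall s, is_derive (fun u => L u - f1 u) s (L1 s - Derive f1 s)).
  { intros s. apply (is_derive_minus L f1); auto. }
  exists L, L1, kL. refine (conj HL (conj DL (conj DL1 (conj _ (conj _ (conj _ _)))))).
  - intros s Hs. symmetry in Lp.
    assert (E : L1 s - Derive f1 s = L1 p - Derive f1 p).
    { apply (deriv_zero _ _ s p Dg Hs). intros u Hu. cbv beta. rewrite H10 by lra. (req; ring). }
    assert (E2 : L s - f1 s = L p - f1 p).
    { apply (deriv_zero _ _ s p Dh Hs). intros u Hu.
      assert (L1 u - Derive f1 u = L1 p - Derive f1 p).
      { apply (deriv_zero _ _ u p Dg ltac:(lra)). intros v Hv. cbv beta. rewrite H10 by lra. (req; ring). }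
      rewrite L1p in H0. lra. }
    rewrite <- Lp in E2. rewrite L1p in E.
    split; [lra|split; [lra|]].
    unfold kL, f2. rewrite H10 by lra. (req; ring).
  - intros s Hs. split; [unfold kL; rewrite H11 by lra; req; ring|].
    assert (E1 : L1 s = L1 b1).
    { symmetry. apply (deriv_zero L1 kL b1 s DL1 Hs). intros u Hu. unfold kL. rewrite H11 by lra. (req; ring). }
    split; [exact E1|].
    assert (Dl : forall u, is_derive (fun u => L u - L1 b1 * u) u (L1 u - L1 b1)).
    { intros u. replace (L1 u - L1 b1) with (L1 u - L1 b1 * 1) by (req; ring).
      apply (is_derive_minus L (fun u => L1 b1 * u)); auto. apply is_derive_scal, isd_id. }
    assert (E := deriv_zero _ _ b1 s Dl Hs).
    cut (L b1 - L1 b1 * b1 = L s - L1 b1 * s). intros; lra.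
    apply E. intros u Hu.
    assert (L1 b1 = L1 u).
    { apply (deriv_zero L1 kL b1 u DL1 ltac:(lra)). intros v Hv. unfold kL. rewrite H11 by lra. (req; ring). }
    lra.
  - intros s Hs. exists (H1 s). split. apply H1b. reflexivity.
  - intros M HM s Hs.
    assert (HM0 : 0 <= M) by (specialize (HM p ltac:(unfold p; lra)); generalize (Rabs_pos (f2 p)); unfold f2 in *; lra).
    assert (B1 : forall u, p <= u <= b1 -> Rabs (L1 u - Derive f1 u) <= M * w1).
    { intros u Hu. replace (L1 u - Derive f1 u) with ((L1 u - Derive f1 u) - (L1 p - Derive f1 p)) by (rewrite L1p; ring).
      apply Rle_trans with (M * (u - p)).
      apply (deriv_bound (fun u => L1 u - Derive f1 u) (fun s => - H1 s * f2 s)); auto. lra.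
      intros v Hv. rewrite Rabs_mult, Rabs_Ropp, (Rabs_pos_eq (H1 v)) by apply H1b.
      apply Rle_trans with (1 * Rabs (f2 v)). apply Rmult_le_compat_r. apply Rabs_pos. apply H1b.
      rewrite Rmult_1_l. apply HM. lra.
      apply Rmult_le_compat_l; auto. unfold p in *. lra. }
    split. apply B1; auto.
    replace (L s - f1 s) with ((L s - f1 s) - (L p - f1 p)) by (rewrite Lp; ring).
    apply Rle_trans with (M * w1 * (s - p)).
    apply (deriv_bound (fun u => L u - f1 u) (fun s => L1 s - Derive f1 s)); auto. unfold p in *; lra.
    intros v Hv. apply B1. unfold p in *; lra.
    apply Rmult_le_compat_l. nra. unfold p in *; lra.
Qed.

Lemma isd_lin (a s : R) : is_derive (fun u => a * u) s a.
Proof. auto_derive; auto; ring. Qed.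

Lemma step_affine H a w : is_step H -> 0 < w -> 
  exists K : R -> R, smooth K /\ (forall s, s <= a -> K s = 0) /\ (forall s, a + w <= s -> K s = 1) /\
  (forall s s', s <= s' -> K s <= K s') /\ (forall s, 0 <= K s <= 1) /\
  (forall s, a + w / 2 <= s -> H (1/2) <= K s).
Proof.
  intros HH Hw. pose proof HH as [HHs [HH0 [HH1 HHm]]].
  exists (fun s => H (/ w * s + - a / w)).
  assert (E : forall s, / w * s + - a / w = (s - a) / w) by (intros; field; lra).
  assert (Iw : 0 < / w) by (apply Rinv_0_lt_compat; lra).
  split; [apply smooth_affine_comp; auto|].
  split; [intros s Hs; apply HH0; rewrite E; unfold Rdiv; nra|].
  split; [intros s Hs; apply HH1; rewrite E; replace ((s - a) / w) with (1 + (s - a - w) * / w) by (field; lra); nra|].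
  split; [intros s s' Hs; apply HHm; rewrite !E; unfold Rdiv; nra|].
  split; [intros s; apply (step_bounds H); auto|].
  intros s Hs. apply HHm. rewrite E. replace ((s - a) / w) with (1/2 + (s - a - w / 2) * / w) by (field; lra); nra.
Qed.

Lemma right_cons f2 H a2 w2 tau c' : smooth f2 -> is_step H -> 0 < H (1/2) -> 0 < w2 -> 0 < tau ->
  exists R0 R1 kR mu S vb, smooth R0 /\ (forall s, is_derive R0 s (R1 s)) /\ (forall s, is_derive R1 s (kR s)) /\
  (forall s, a2 <= s -> R0 s = f2 s /\ R1 s = Derive f2 s /\ kR s = Derive (Derive f2) s) /\
  (forall s, s <= a2 - w2 - tau -> kR s = 0 /\ R1 s = c' /\ R0 s = R0 (a2 - w2 - tau) + c' * (s - (a2 - w2 - tau))) /\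
  H (1/2) * tau / 2 <= S /\ S <= w2 + tau /\ mu * S = c' - vb /\
  (forall M, (forall s, a2 - w2 <= s <= a2 -> Rabs (Derive (Derive f2) s) <= M) -> Rabs (vb - Derive f2 a2) <= M * w2) /\
  (forall s, a2 - w2 - tau <= s <= a2 - w2 -> exists j, 0 <= j <= 1 /\ kR s = - mu * j /\
      (0 <= mu -> c' - R1 s <= mu * j * tau /\ R1 s <= c') /\
      Rmin c' (R1 (a2 - w2)) <= R1 s <= Rmax c' (R1 (a2 - w2))) /\
  (forall s, a2 - w2 <= s <= a2 -> exists h, 0 <= h <= 1 /\ kR s = h * Derive (Derive f2) s - mu * (1 - h)) /\
  (forall M, (forall s, a2 - w2 <= s <= a2 -> Rabs (Derive (Derive f2) s) <= M) ->
     forall s, a2 - w2 <= s <= a2 -> Rabs (R1 s - Derive f2 s) <= (M + Rabs mu) * w2 /\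
        Rabs (R0 s - f2 s) <= (M + Rabs mu) * w2 * w2).
Proof.
  intros Hf2 HH h0pos Hw Ht. set (e2 := a2 - w2 - tau). set (h0 := H (1/2)).
  destruct (step_affine H (a2 - w2) w2 HH Hw) as [H2 [H2s [H20 [H21 [H2m [H2b _]]]]]].
  destruct (step_affine H e2 tau HH Ht) as [J [Js [J0 [J1 [Jm [Jb Jh]]]]]].
  replace (a2 - w2 + w2) with a2 in H21 by ring.
  replace (e2 + tau) with (a2 - w2) in J1 by (unfold e2; ring).
  set (g2 := Derive (Derive f2)).
  assert (Df1 : forall s, is_derive f2 s (Derive f2 s)) by (intros; apply smooth_derivs, Hf2).
  assert (Df2 : forall s, is_derive (Derive f2) s (g2 s)) by (intros; apply smooth_derivs, Hf2).
  set (kb := fun s => H2 s * g2 s).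
  set (kn := fun s => - ((1 - H2 s) * J s)).
  assert (Hkb : smooth kb) by (apply smooth_mult; auto; apply smooth_Derive, smooth_Derive, Hf2).
  assert (Hkn : smooth kn) by (apply smooth_opp, smooth_mult; auto; apply smooth_minus; auto using smooth_const).
  destruct (solve2 kb a2 (f2 a2) (Derive f2 a2) Hkb) as [Pb [Pb1 [HPb [HPb1 [DPb [DPb1 [Pba Pb1a]]]]]]].
  destruct (solve2 kn a2 0 0 Hkn) as [N [N1 [HN [HN1 [DN [DN1 [Na N1a]]]]]]].
  assert (kn_b : forall s, -1 <= kn s <= 0).
  { intros s. unfold kn. specialize (H2b s). specialize (Jb s).
    assert (0 <= (1 - H2 s) * J s) by (apply Rmult_le_pos; lra).
    assert ((1 - H2 s) * J s <= 1 * 1) by (apply Rmult_le_compat; lra). lra. }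
  set (S := N1 e2).
  assert (N1mono : forall u v, u <= v -> N1 v <= N1 u).
  { intros u v Huv. apply (deriv_nonpos N1 kn u v DN1 Huv). intros; apply kn_b. }
  assert (Spos : h0 * tau / 2 <= S).
  { set (m := e2 + tau / 2).
    assert (G1 : N1 (a2 - w2) + h0 * (a2 - w2) <= N1 m + h0 * m).
    { apply (deriv_nonpos (fun u => N1 u + h0 * u) (fun u => kn u + h0)).
      intros u. apply (is_derive_plus N1 (fun u => h0 * u)); auto.
      apply isd_lin.
      unfold m, e2; lra.
      intros u Hu. unfold kn. rewrite H20 by lra. specialize (Jh u ltac:(unfold m in Hu; lra)). fold h0 in Jh. lra. }
    assert (N1 a2 <= N1 (a2 - w2)) by (apply N1mono; lra).
    assert (N1 m <= N1 e2) by (apply N1mono; unfold m; lra).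
    unfold S, m in *. unfold e2 in *. lra. }
  assert (Sle : S <= w2 + tau).
  { assert (Rabs (N1 a2 - N1 e2) <= 1 * (a2 - e2)).
    { apply (deriv_bound N1 kn); auto. unfold e2; lra. intros u _. apply abs_le_i. specialize (kn_b u). lra. }
    apply abs_le_e in H0. unfold S, e2 in *. lra. }
  assert (Sp : 0 < S).
  { assert (0 < h0) by exact h0pos. assert (0 < h0 * tau) by (apply Rmult_lt_0_compat; lra). lra. }
  set (vb := Pb1 e2). set (mu := (c' - vb) / S).
  assert (muS : mu * S = c' - vb) by (unfold mu; field; lra).
  set (R0 := fun s => Pb s + mu * N s). set (R1 := fun s => Pb1 s + mu * N1 s).
  set (kR := fun s => kb s + mu * kn s).
  assert (DR0 : forall s, is_derive R0 s (R1 s)).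
  { intros s. apply (is_derive_plus Pb (fun s => mu * N s)); auto. apply is_derive_scal; auto. }
  assert (DR1 : forall s, is_derive R1 s (kR s)).
  { intros s. apply (is_derive_plus Pb1 (fun s => mu * N1 s)); auto. apply is_derive_scal; auto. }
  assert (HR0 : smooth R0) by (apply smooth_plus; auto; apply smooth_scal; auto).
  assert (kR_right : forall s, a2 <= s -> kR s = g2 s).
  { intros s Hs. unfold kR, kb, kn. rewrite H21, J1 by lra. ring. }
  assert (kR_left : forall s, s <= e2 -> kR s = 0).
  { intros s Hs. unfold kR, kb, kn. rewrite H20, J0 by (unfold e2 in *; lra). ring. }
  assert (kR_J : forall s, s <= a2 - w2 -> kR s = - mu * J s).
  { intros s Hs. unfold kR, kb, kn. rewrite H20 by lra. ring. }
  assert (kR_H : forall s, a2 - w2 <= s -> kR s = H2 s * g2 s - mu * (1 - H2 s)).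
  { intros s Hs. unfold kR, kb, kn. rewrite J1 by lra. ring. }
  assert (R1e : R1 e2 = c') by (unfold R1; fold S; fold vb; lra).
  assert (R1a : R1 a2 = Derive f2 a2) by (unfold R1; rewrite Pb1a, N1a; ring).
  assert (R0a : R0 a2 = f2 a2) by (unfold R0; rewrite Pba, Na; ring).
  assert (Dg : forall s, is_derive (fun u => R1 u - Derive f2 u) s (kR s - g2 s)).
  { intros s. apply (is_derive_minus R1 (Derive f2)); auto. }
  assert (Dh : forall s, is_derive (fun u => R0 u - f2 u) s (R1 s - Derive f2 s)).
  { intros s. apply (is_derive_minus R0 f2); auto. }
  exists R0, R1, kR, mu, S, vb.
  refine (conj HR0 (conj DR0 (conj DR1 (conj _ (conj _ (conj Spos (conj Sle (conj muS (conj _ (conj _ (conj _ _))))))))))).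
  - intros s Hs.
    assert (E : R1 a2 - Derive f2 a2 = R1 s - Derive f2 s).
    { apply (deriv_zero _ _ a2 s Dg Hs). intros u Hu. rewrite kR_right by lra. req; ring. }
    assert (E2 : R0 a2 - f2 a2 = R0 s - f2 s).
    { apply (deriv_zero _ _ a2 s Dh Hs). intros u Hu.
      assert (R1 a2 - Derive f2 a2 = R1 u - Derive f2 u).
      { apply (deriv_zero _ _ a2 u Dg ltac:(lra)). intros v Hv. rewrite kR_right by lra. req; ring. }
      lra. }
    split; [lra|split; [lra|]]. apply kR_right; auto.
  - intros s Hs. split; [apply kR_left; auto|].
    assert (E1 : R1 s = c').
    { rewrite <- R1e. apply (deriv_zero R1 kR s e2 DR1 Hs). intros u Hu. apply kR_left; lra. }
    split; [exact E1|].
    assert (Dl : forall u, is_derive (fun u => R0 u - c' * u) u (R1 u - c')).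
    { intros u. apply (is_derive_minus R0 (fun u => c' * u)); auto. apply isd_lin. }
    assert (E := deriv_zero _ _ s e2 Dl Hs).
    cut (R0 s - c' * s = R0 e2 - c' * e2). intros; lra.
    apply E. intros u Hu.
    assert (R1 u = R1 e2).
    { apply (deriv_zero R1 kR u e2 DR1 ltac:(lra)). intros v Hv. apply kR_left; lra. }
    rewrite H0, R1e. req; ring.
  - intros M HM. unfold vb.
    assert (E : Pb1 e2 = Pb1 (a2 - w2)).
    { apply (deriv_zero Pb1 kb e2 (a2 - w2) DPb1). unfold e2; lra. intros u Hu. unfold kb. rewrite H20 by lra. req; ring. }
    rewrite E, <- Pb1a. rewrite Rabs_minus_sym. replace (M * w2) with (M * (a2 - (a2 - w2))) by ring.
    apply (deriv_bound Pb1 kb); auto. lra. intros u Hu. unfold kb. rewrite Rabs_mult.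
    rewrite (Rabs_pos_eq (H2 u)) by apply H2b.
    apply Rle_trans with (1 * Rabs (g2 u)). apply Rmult_le_compat_r. apply Rabs_pos. apply H2b.
    rewrite Rmult_1_l. apply HM; auto.
  - intros s Hs. exists (J s). split; [apply Jb|]. split; [apply kR_J; lra|]. split.
    + intros Hmu.
      assert (G1 : R1 e2 + mu * J s * e2 <= R1 s + mu * J s * s).
      { apply (deriv_nonneg (fun u => R1 u + mu * J s * u) (fun u => kR u + mu * J s)).
        intros u. apply (is_derive_plus R1 (fun u => mu * J s * u)); auto. apply isd_lin.
        lra. intros u Hu. rewrite kR_J by lra. assert (J u <= J s) by (apply Jm; lra).
        assert (0 <= mu * (J s - J u)) by (apply Rmult_le_pos; lra). lra. }
      assert (0 <= mu * J s) by (apply Rmult_le_pos; auto; apply Jb).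
      assert (mu * J s * (s - e2) <= mu * J s * tau) by (apply Rmult_le_compat_l; auto; unfold e2 in *; lra).
      rewrite R1e in G1. split. lra.
      assert (A1 : R1 s <= R1 e2).
      { apply (deriv_nonpos R1 kR e2 s DR1). lra. intros u Hu. rewrite kR_J by lra.
        assert (0 <= mu * J u) by (apply Rmult_le_pos; auto; apply Jb). lra. }
      lra.
    + destruct (Rle_dec 0 mu) as [Hmu|Hmu].
      * assert (A1 : R1 s <= R1 e2).
        { apply (deriv_nonpos R1 kR e2 s DR1). lra. intros u Hu. rewrite kR_J by lra.
          assert (0 <= mu * J u) by (apply Rmult_le_pos; auto; apply Jb). lra. }
        assert (A2 : R1 (a2 - w2) <= R1 s).
        { apply (deriv_nonpos R1 kR s (a2 - w2) DR1). lra. intros u Hu. rewrite kR_J by lra.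
          assert (0 <= mu * J u) by (apply Rmult_le_pos; auto; apply Jb). lra. }
        rewrite R1e in A1. split. apply Rle_trans with (R1 (a2 - w2)); auto; apply Rmin_r.
        apply Rle_trans with c'; auto; apply Rmax_l.
      * assert (A1 : R1 e2 <= R1 s).
        { apply (deriv_nonneg R1 kR e2 s DR1). lra. intros u Hu. rewrite kR_J by lra.
          assert (0 <= - mu * J u) by (apply Rmult_le_pos; [lra|apply Jb]). lra. }
        assert (A2 : R1 s <= R1 (a2 - w2)).
        { apply (deriv_nonneg R1 kR s (a2 - w2) DR1). lra. intros u Hu. rewrite kR_J by lra.
          assert (0 <= - mu * J u) by (apply Rmult_le_pos; [lra|apply Jb]). lra. }
        rewrite R1e in A1. split. apply Rle_trans with c'; auto; apply Rmin_l.
        apply Rle_trans with (R1 (a2 - w2)); auto; apply Rmax_r.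
  - intros s Hs. exists (H2 s). split; [apply H2b|]. apply kR_H; lra.
  - intros M HM s Hs.
    assert (HM0 : 0 <= M) by (specialize (HM a2 ltac:(lra)); generalize (Rabs_pos (g2 a2)); unfold g2 in *; lra).
    assert (Bd : forall u, a2 - w2 <= u <= a2 -> Rabs (kR u - g2 u) <= M + Rabs mu).
    { intros u Hu. rewrite kR_H by lra.
      replace (H2 u * g2 u - mu * (1 - H2 u) - g2 u) with ((1 - H2 u) * (- g2 u - mu)) by ring.
      rewrite Rabs_mult. rewrite (Rabs_pos_eq (1 - H2 u)) by (specialize (H2b u); lra).
      apply Rle_trans with (1 * Rabs (- g2 u - mu)).
      apply Rmult_le_compat_r. apply Rabs_pos. specialize (H2b u); lra.
      rewrite Rmult_1_l. eapply Rle_trans. apply Rabs_triang. rewrite Rabs_Ropp, Rabs_Ropp.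
      specialize (HM u Hu). lra. }
    assert (B1 : forall u, a2 - w2 <= u <= a2 -> Rabs (R1 u - Derive f2 u) <= (M + Rabs mu) * w2).
    { intros u Hu. replace (R1 u - Derive f2 u) with (- ((R1 a2 - Derive f2 a2) - (R1 u - Derive f2 u))) by (rewrite R1a; ring).
      rewrite Rabs_Ropp. apply Rle_trans with ((M + Rabs mu) * (a2 - u)).
      apply (deriv_bound (fun u => R1 u - Derive f2 u) (fun s => kR s - g2 s)); auto. lra.
      intros v Hv. apply Bd. lra.
      apply Rmult_le_compat_l. generalize (Rabs_pos mu); lra. lra. }
    split. apply B1; auto.
    replace (R0 s - f2 s) with (- ((R0 a2 - f2 a2) - (R0 s - f2 s))) by (rewrite R0a; ring).
    rewrite Rabs_Ropp. apply Rle_trans with ((M + Rabs mu) * w2 * (a2 - s)).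
    apply (deriv_bound (fun u => R0 u - f2 u) (fun s => R1 s - Derive f2 s)); auto. lra.
    intros v Hv. apply B1. lra.
    apply Rmult_le_compat_l. generalize (Rabs_pos mu); nra. lra.
Qed.

Lemma conv_pos h A B : 0 <= h <= 1 -> 0 < A -> 0 < B -> 0 < h * A + (1 - h) * B.
Proof. intros. nra. Qed.

Lemma Phi_comb x r v a b h : Phi x r v (h * a + (1 - h) * b) = h * Phi x r v a + (1 - h) * Phi x r v b.
Proof. unfold Phi. ring. Qed.

Lemma sq_between a b v : Rmin a b <= v <= Rmax a b -> v ^ 2 <= Rmax (a ^ 2) (b ^ 2).
Proof.
  intros Hv. assert (Ma : a ^ 2 <= Rmax (a ^ 2) (b ^ 2)) by apply Rmax_l.
  assert (Mb : b ^ 2 <= Rmax (a ^ 2) (b ^ 2)) by apply Rmax_r.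
  revert Hv. unfold Rmin. unfold Rmax at 1. destruct (Rle_dec a b); intros [H1 H2];
  destruct (Rle_dec 0 v); simpl in *; nra.
Qed.

Lemma sq_lt_sqrt c A : 0 < c -> c < sqrt A -> c ^ 2 < A.
Proof.
  intros H1 H2. destruct (Rle_dec A 0) as [HA|HA].
  - rewrite sqrt_neg_0 in H2 by exact HA. lra.
  - rewrite <- (sqrt_sqrt A) by lra. simpl. rewrite Rmult_1_r. apply Rmult_le_0_lt_compat; lra.
Qed.

Lemma sq_near v d e : Rabs (v - d) < e -> e <= 1 -> v ^ 2 <= d ^ 2 + e * (2 * Rabs d + 1).
Proof.
  intros H He. apply abs_lt_e in H.
  assert (v ^ 2 - d ^ 2 = (v - d) * (v + d)) by ring.
  assert (Rabs ((v - d) * (v + d)) <= e * (2 * Rabs d + 1)).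
  { apply abs_prod_bound. apply abs_le_i; lra.
    replace (v + d) with ((v - d) + 2 * d) by ring. eapply Rle_trans. apply Rabs_triang.
    rewrite Rabs_mult, (Rabs_pos_eq 2) by lra. assert (Rabs (v - d) <= 1) by (apply abs_le_i; lra). lra. }
  apply abs_le_e in H1. lra.
Qed.

Lemma abs_tri3 a b c e1 e2 : Rabs (a - b) <= e1 -> Rabs (b - c) < e2 -> Rabs (a - c) < e1 + e2.
Proof.
  intros H1 H2. replace (a - c) with ((a - b) + (b - c)) by ring.
  eapply Rle_lt_trans. apply Rabs_triang. lra.
Qed.

Lemma smooth_shift g t : smooth g -> smooth (fun s => g (s - t)).
Proof.
  intros H. apply (smooth_ext (fun s => g (1 * s + - t))). intros; f_equal; ring.
  apply smooth_affine_comp, H.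
Qed.

Lemma isd_shift (g : R -> R) (l t s : R) : is_derive g (s - t) l -> is_derive (fun y => g (y - t)) s l.
Proof.
  intros H. exact (is_derive_n_comp_trans g 1 s (- t) l H).
Qed.

Lemma mul_le_of_le_div a b c : 0 < c -> a <= b / c -> a * c <= b.
Proof. intros Hc H. apply Rmult_le_compat_r with (r := c) in H; [|lra].
  unfold Rdiv in H. rewrite Rmult_assoc, Rinv_l in H by lra. lra. Qed.

Lemma le_div_of_mul_le a b c : 0 < c -> a * c <= b -> a <= b / c.
Proof. intros Hc H. apply Rmult_le_reg_r with c; auto. unfold Rdiv. rewrite Rmult_assoc, Rinv_l by lra. lra. Qed.

Lemma conv_pos' h A B : 0 <= h <= 1 -> 0 < A -> 0 < B -> 0 < (1 - h) * A + h * B.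
Proof. intros. nra. Qed.

Lemma PA1 mI r2 r mu j A : 0 < mI -> 0 < r2 -> 0 <= r <= 3 * r2 / 2 -> 0 <= j <= 1 ->
  - (2 * mI / (25 * r2)) <= mu -> mI / 4 <= A -> 0 < A + 2 * r * mu * j.
Proof.
  intros HmI Hr2 Hr Hj Hmu HA. destruct (Rle_dec 0 mu) as [Hm|Hm].
  - assert (0 <= r * mu * j) by (apply Rmult_le_pos; [apply Rmult_le_pos|]; lra). lra.
  - assert (E1 : r * mu * j - r * mu = (r * mu) * (j - 1)) by ring.
    assert (E2 : r * mu <= 0) by nra.
    assert (E3 : 0 <= (r * mu) * (j - 1)) by nra.
    assert (E4 : 3 * r2 / 2 * mu <= r * mu) by nra.
    assert (E5 : 3 * r2 / 2 * (- (2 * mI / (25 * r2))) <= 3 * r2 / 2 * mu) by (apply Rmult_le_compat_l; lra).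
    replace (3 * r2 / 2 * (- (2 * mI / (25 * r2)))) with (- (3 * mI / 25)) in E5 by (field; lra).
    lra.
Qed.

Lemma PA2 tau r2 r mu j c GA : 0 < tau -> 0 < r2 -> r2 / 2 <= r -> 0 <= mu -> 0 <= j ->
  c < mu * j * tau -> 2 * GA * tau <= c * r2 -> 2 * GA < 2 * r * mu * j.
Proof.
  intros Ht Hr2 Hr Hmu Hj Hc HG.
  assert (0 <= mu * j * tau) by (apply Rmult_le_pos; [apply Rmult_le_pos|]; lra).
  assert (r2 * (mu * j * tau) <= 2 * r * (mu * j * tau)) by nra.
  assert (r2 * c < r2 * (mu * j * tau)) by (apply Rmult_lt_compat_l; lra).
  assert (2 * GA * tau < 2 * r * mu * j * tau) by nra.
  nra.
Qed.

Lemma minmax_abs a b v V : Rmin a b <= v <= Rmax a b -> Rabs a <= V -> Rabs b <= V -> Rabs v <= V.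
Proof.
  intros [H1 H2] Ha Hb. apply abs_le_e in Ha. apply abs_le_e in Hb. apply abs_le_i.
  unfold Rmin, Rmax in *. destruct (Rle_dec a b); lra.
Qed.

Lemma pos_of_mul_pos a b : 0 < a -> 0 < a * b -> 0 < b.
Proof. intros Ha Hab. destruct (Rle_dec b 0) as [Hb|Hb]; [|lra].
  assert (a * b <= a * 0) by (apply Rmult_le_compat_l; lra). lra. Qed.

Ltac rmin_le := first [ apply Rle_refl | eapply Rle_trans; [apply Rmin_l|rmin_le] | eapply Rle_trans; [apply Rmin_r|rmin_le] ].

Theorem lemma4p4 (x f1 f2 : R -> R) (a1 b1 a2 b2 : R) :
  a1 < b1 -> a2 < b2 ->
  smooth f1 -> smooth f2 -> C1_pos x ->
  (forall s, a1 <= s <= b1 -> 0 < f1 s) ->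
  (forall s, a2 <= s <= b2 -> 0 < f2 s) ->
  (* (i) *)
  (forall s, a1 <= s <= b1 -> 0 < mu x f1 s) ->
  (forall s, a2 <= s <= b2 -> 0 < mu x f2 s) ->
  (* (ii) *)
  f1 b1 < f2 a2 ->
  (* (iii) *)
  0 < Derive f1 b1 ->
  Derive f1 b1 < sqrt (1 + x (f1 b1) ^ 2 + 2 * x (f1 b1) * Derive x (f1 b1) * f1 b1) ->
  (* (iv) *)
  Derive f2 a2 <= Derive f1 b1 ->
  (* (v) *)
  (forall r r', f1 b1 <= r -> r <= r' -> r' <= f2 a2 -> G x r <= G x r') ->
  exists t : R, b1 <= a2 + t /\
    exists f : R -> R,
      smooth f /\
      (forall s, a1 <= s <= b2 + t -> 0 < f s) /\
      (forall s, a1 <= s <= (a1 + b1) / 2 -> f s = f1 s) /\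
      (forall s, (a2 + b2) / 2 + t <= s <= b2 + t -> f s = f2 (s - t)) /\
      (forall s, a1 <= s <= b2 + t -> 0 < mu x f s).
Proof.
  intros Hab1 Hab2 Hf1 Hf2 Hx Pf1 Pf2 Mf1 Mf2 Hr12 Hc Hsq Hd HG.
  destruct step_exists as [H [HHs [HH0 [HH1 [HHm Hh0]]]]].
  assert (HH : is_step H) by exact (conj HHs (conj HH0 (conj HH1 HHm))).
  assert (r1pos : 0 < f1 b1) by (apply Pf1; lra).
  assert (r2pos : 0 < f2 a2) by (apply Pf2; lra).
  assert (m1pos : 0 < 1 - Derive f1 b1 ^ 2 + G x (f1 b1)).
  { unfold G. generalize (sq_lt_sqrt _ _ Hc Hsq). lra. }
  assert (Gr12 : G x (f1 b1) <= G x (f2 a2)) by (apply HG; lra).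
  assert (Q1 : 0 < Phi x (f1 b1) (Derive f1 b1) (Derive (Derive f1) b1)).
  { apply (Phi_pos_of_mu x f1 b1); [apply Pf1; lra| apply Mf1; lra]. }
  assert (Q0 : 0 < Phi x (f1 b1) (Derive f1 b1) 0) by (unfold Phi; lra).
  assert (Q2 : 0 < Phi x (f2 a2) (Derive f2 a2) (Derive (Derive f2) a2)).
  { apply (Phi_pos_of_mu x f2 a2); [apply Pf2; lra| apply Mf2; lra]. }
  destruct (Phi_nbhd x _ _ _ Hx r1pos Q1) as [d1 [Hd1 N1]].
  destruct (Phi_nbhd x _ _ _ Hx r1pos Q0) as [d0 [Hd0 N0]].
  destruct (Phi_nbhd x _ _ _ Hx r2pos Q2) as [dR [HdR NR]].
  assert (c1 := smooth_cont _ b1 Hf1).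
  assert (c2 := smooth_cont _ b1 (smooth_Derive _ Hf1)).
  assert (c3 := smooth_cont _ b1 (smooth_Derive _ (smooth_Derive _ Hf1))).
  assert (c4 := smooth_cont _ a2 Hf2).
  assert (c5 := smooth_cont _ a2 (smooth_Derive _ Hf2)).
  assert (c6 := smooth_cont _ a2 (smooth_Derive _ (smooth_Derive _ Hf2))).
  assert (Mf1' : forall s, a1 <= s <= b1 -> 0 < Phi x (f1 s) (Derive f1 s) (Derive (Derive f1) s)).
  { intros s Hs. apply (Phi_pos_of_mu x f1 s); auto. }
  assert (Mf2' : forall s, a2 <= s <= b2 -> 0 < Phi x (f2 s) (Derive f2 s) (Derive (Derive f2) s)).
  { intros s Hs. apply (Phi_pos_of_mu x f2 s); auto. }
  clear Mf1 Mf2.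
  remember (Derive (Derive f1) b1) as k1 eqn:Ek1.
  remember (Derive (Derive f2) a2) as k2 eqn:Ek2.
  remember (Derive f1 b1) as c eqn:Ec.
  remember (Derive f2 a2) as d eqn:Ed.
  remember (f1 b1) as r1 eqn:Er1.
  remember (f2 a2) as r2 eqn:Er2.
  clear Hsq.
  remember (1 - c ^ 2 + G x r1) as m1 eqn:Em1.
  assert (HmI : exists mI, 0 < mI /\ mI <= m1 /\ (0 < 1 + G x r2 - d ^ 2 -> mI <= 1 + G x r2 - d ^ 2)).
  { destruct (Rlt_dec 0 (1 + G x r2 - d ^ 2)) as [Hp|Hp].
    - exists (Rmin m1 (1 + G x r2 - d ^ 2)). split. apply Rmin_pos; lra. split. apply Rmin_l. intros; apply Rmin_r.
    - exists m1. split. lra. split. lra. intros; contradiction. }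
  destruct HmI as [mI [mIpos [mIm1 mImd]]].
  destruct (cont_eps (G x) r2 (G_cont x r2 Hx r2pos) (mI / 4)) as [rho0 [Hrho0 Grho]]. lra.
  remember (Rmin rho0 (Rmin (r2 / 2) ((r2 - r1) / 2))) as rho eqn:Erho.
  assert (rho_pos : 0 < rho) by (subst rho; repeat apply Rmin_pos; lra).
  assert (rho1 : rho <= rho0) by (subst rho; rmin_le).
  assert (rho2 : rho <= r2 / 2) by (subst rho; rmin_le).
  assert (rho3 : rho <= (r2 - r1) / 2) by (subst rho; rmin_le).
  clear Erho.
  assert (GN : forall r, Rabs (r - r2) < rho -> G x r2 - mI / 4 < G x r).
  { intros r Hr. assert (Rabs (G x r - G x r2) < mI / 4) by (apply Grho; lra). apply abs_lt_e in H0. lra. }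
  remember (c + Rabs d + 2) as V eqn:EV.
  assert (Vpos : 0 < V) by (generalize (Rabs_pos d); lra).
  remember (V ^ 2 + Rabs (G x r2) + mI + 2) as GA eqn:EGA.
  assert (GApos : 0 < GA) by (generalize (Rabs_pos (G x r2)); assert (0 <= V ^ 2) by (apply pow_le; lra); lra).
  remember (Rmin (rho / (4 * V)) (c * r2 / (2 * GA))) as tau eqn:Etau.
  assert (tau_pos : 0 < tau).
  { subst tau. apply Rmin_pos; apply Rdiv_lt_0_compat; try apply Rmult_lt_0_compat; lra. }
  assert (T1 : 2 * V * tau < rho).
  { assert (tau <= rho / (4 * V)) by (subst tau; apply Rmin_l).
    apply mul_le_of_le_div in H0; [|lra]. lra. }
  assert (T2 : 2 * GA * tau <= c * r2).
  { assert (tau <= c * r2 / (2 * GA)) by (subst tau; apply Rmin_r).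
    apply mul_le_of_le_div in H0; [|lra]. lra. }
  clear Etau.
  remember (H (1 / 2)) as h0 eqn:Eh0.
  remember (h0 * tau * mI / (50 * r2)) as eps_m eqn:Eepsm.
  assert (epsm_pos : 0 < eps_m).
  { subst eps_m. apply Rdiv_lt_0_compat; [|lra]. repeat apply Rmult_lt_0_compat; lra. }
  remember (Rmin (Rmin (Rmin d1 d0) (Rmin 1 (r1 / 2))) (Rmin (Rmin ((r2 - r1) / 4) (c / 2)) (Rmin (m1 / (4 * (2 * c + 1))) eps_m))) as delta eqn:Edelta.
  assert (dl_pos : 0 < delta).
  { subst delta. repeat apply Rmin_pos; try lra. apply Rdiv_lt_0_compat; lra. }
  assert (dl1 : delta <= d1) by (subst delta; rmin_le).
  assert (dl0 : delta <= d0) by (subst delta; rmin_le).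
  assert (dl2 : delta <= 1) by (subst delta; rmin_le).
  assert (dl3 : delta <= r1 / 2) by (subst delta; rmin_le).
  assert (dl4 : delta <= (r2 - r1) / 4) by (subst delta; rmin_le).
  assert (dl5 : delta <= c / 2) by (subst delta; rmin_le).
  assert (dl6 : delta * (2 * c + 1) <= m1 / 4).
  { assert (delta <= m1 / 4 / (2 * c + 1)).
    { replace (m1 / 4 / (2 * c + 1)) with (m1 / (4 * (2 * c + 1))) by (field; lra). subst delta; rmin_le. }
    apply mul_le_of_le_div in H0; lra. }
  assert (dl7 : delta <= eps_m) by (subst delta; rmin_le).
  clear Edelta.
  destruct (cont_eps _ _ c1 (delta / 2)) as [e1 [He1 C1]]. lra.
  destruct (cont_eps _ _ c2 (delta / 2)) as [e2' [He2' C2]]. lra.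
  destruct (cont_eps _ _ c3 (Rmin delta 1)) as [e3 [He3 C3]]. apply Rmin_pos; lra.
  rewrite <- Er1 in C1. rewrite <- Ec in C2. rewrite <- Ek1 in C3.
  remember (Rabs k1 + 1) as M1 eqn:EM1.
  assert (M1pos : 0 < M1) by (generalize (Rabs_pos k1); lra).
  remember (Rmin (Rmin (Rmin (e1 / 2) (e2' / 2)) (e3 / 2)) (Rmin ((b1 - a1) / 2) (Rmin 1 (delta / (2 * M1))))) as w1 eqn:Ew1.
  assert (w1pos : 0 < w1).
  { subst w1. repeat apply Rmin_pos; try lra. apply Rdiv_lt_0_compat; lra. }
  assert (w1a : w1 <= e1 / 2) by (subst w1; rmin_le).
  assert (w1b : w1 <= e2' / 2) by (subst w1; rmin_le).
  assert (w1c : w1 <= e3 / 2) by (subst w1; rmin_le).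
  assert (w1d : w1 <= (b1 - a1) / 2) by (subst w1; rmin_le).
  assert (w1e : w1 <= 1) by (subst w1; rmin_le).
  assert (w1f : M1 * w1 <= delta / 2).
  { assert (w1 <= delta / (2 * M1)) by (subst w1; rmin_le). apply mul_le_of_le_div in H0; lra. }
  clear Ew1.
  destruct (left_cons f1 H b1 w1 Hf1 HH w1pos) as [L [L1 [kL [HL [DL [DL1 [Lleft [Lright [Lzone Lbound]]]]]]]]].
  assert (B1 : forall s, b1 - w1 <= s <= b1 -> Rabs (Derive (Derive f1) s) <= M1).
  { intros s Hs. assert (Rabs (Derive (Derive f1) s - k1) < Rmin delta 1) by (apply C3; apply abs_lt_i; lra).
    assert (Rmin delta 1 <= 1) by apply Rmin_r. apply abs_lt_e in H0.
    apply abs_le_i. generalize (abs_le_e k1 (Rabs k1) (Rle_refl _)). lra. }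
  specialize (Lbound M1 B1).
  assert (Zc : forall s, b1 - w1 <= s <= b1 -> Rabs (L s - r1) < delta /\ Rabs (L1 s - c) < delta /\
            Rabs (Derive (Derive f1) s - k1) < delta).
  { intros s Hs. destruct (Lbound s Hs) as [LB1 LB2].
    assert (Rabs (f1 s - r1) < delta / 2) by (apply C1; apply abs_lt_i; lra).
    assert (Rabs (Derive f1 s - c) < delta / 2) by (apply C2; apply abs_lt_i; lra).
    assert (Rabs (Derive (Derive f1) s - k1) < Rmin delta 1) by (apply C3; apply abs_lt_i; lra).
    assert (Rmin delta 1 <= delta) by apply Rmin_l.
    assert (M1 * w1 * w1 <= M1 * w1) by (assert (0 <= M1 * w1) by nra; nra).
    split. assert (Rabs (L s - r1) < M1 * w1 * w1 + delta / 2) by (apply abs_tri3 with (f1 s); auto). lra.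
    split. assert (Rabs (L1 s - c) < M1 * w1 + delta / 2) by (apply abs_tri3 with (Derive f1 s); auto). lra.
    lra. }
  remember (L1 b1) as c' eqn:Ec'.
  remember (L b1) as Lb eqn:ELb.
  assert (cc' : Rabs (c' - c) < delta) by (subst; apply Zc; lra).
  assert (rLb : Rabs (Lb - r1) < delta) by (subst; apply Zc; lra).
  apply abs_lt_e in cc' as cc''. apply abs_lt_e in rLb as rLb'.
  assert (c'pos : c / 2 < c') by lra.
  assert (c'sq : c' ^ 2 <= c ^ 2 + m1 / 4).
  { assert (E := sq_near c' c delta cc' dl2). rewrite Rabs_pos_eq in E by lra. lra. }
  remember (Rmin (Rmin dR 1) (mI / (2 * (2 * Rabs d + 1)))) as dR' eqn:EdR'.
  assert (dRp : 0 < dR') by (subst dR'; repeat apply Rmin_pos; try lra; apply Rdiv_lt_0_compat; generalize (Rabs_pos d); lra).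
  assert (dRa : dR' <= dR) by (subst dR'; rmin_le).
  assert (dRb : dR' <= 1) by (subst dR'; rmin_le).
  assert (dRc : dR' * (2 * Rabs d + 1) <= mI / 2).
  { assert (dR' <= mI / 2 / (2 * Rabs d + 1)).
    { replace (mI / 2 / (2 * Rabs d + 1)) with (mI / (2 * (2 * Rabs d + 1))) by (field; generalize (Rabs_pos d); lra). subst dR'; rmin_le. }
    apply mul_le_of_le_div in H0; [lra|generalize (Rabs_pos d); lra]. }
  clear EdR'.
  destruct (cont_eps _ _ c4 (dR' / 2)) as [e4 [He4 C4]]. lra.
  destruct (cont_eps _ _ c5 (dR' / 2)) as [e5 [He5 C5]]. lra.
  destruct (cont_eps _ _ c6 (Rmin dR' 1)) as [e6 [He6 C6]]. apply Rmin_pos; lra.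
  rewrite <- Er2 in C4. rewrite <- Ed in C5. rewrite <- Ek2 in C6.
  remember (Rabs k2 + 1) as M2 eqn:EM2.
  assert (M2pos : 1 <= M2) by (generalize (Rabs_pos k2); lra).
  assert (h0pos : 0 < h0) by (subst h0; exact Hh0).
  remember ((c + 1 + Rabs d + M2) * 2 / (h0 * tau)) as muB eqn:EmuB.
  assert (muBpos : 0 < muB).
  { subst muB. apply Rdiv_lt_0_compat. generalize (Rabs_pos d); lra. apply Rmult_lt_0_compat; lra. }
  remember (Rmin (Rmin (Rmin tau (Rmin (e4 / 2) (Rmin (e5 / 2) (e6 / 2)))) (Rmin 1 (1 / M2)))
            (Rmin (Rmin (eps_m / M2) (c / (2 * M2))) (dR' / (4 * (M2 + muB))))) as w2 eqn:Ew2.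
  assert (w2pos : 0 < w2).
  { subst w2. repeat apply Rmin_pos; try lra; apply Rdiv_lt_0_compat; lra. }
  assert (w2a : w2 <= tau) by (subst w2; rmin_le).
  assert (w2b : w2 <= e4 / 2) by (subst w2; rmin_le).
  assert (w2c : w2 <= e5 / 2) by (subst w2; rmin_le).
  assert (w2d : w2 <= e6 / 2) by (subst w2; rmin_le).
  assert (w2e : w2 <= 1) by (subst w2; rmin_le).
  assert (w2f : M2 * w2 <= 1).
  { assert (w2 <= 1 / M2) by (subst w2; rmin_le). apply mul_le_of_le_div in H0; lra. }
  assert (w2g : M2 * w2 <= eps_m).
  { assert (w2 <= eps_m / M2) by (subst w2; rmin_le). apply mul_le_of_le_div in H0; lra. }
  assert (w2h : M2 * w2 <= c / 2).
  { assert (w2 <= c / 2 / M2).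
    { replace (c / 2 / M2) with (c / (2 * M2)) by (field; lra). subst w2; rmin_le. }
    apply mul_le_of_le_div in H0; lra. }
  assert (w2i : (M2 + muB) * w2 <= dR' / 4).
  { assert (w2 <= dR' / 4 / (M2 + muB)).
    { replace (dR' / 4 / (M2 + muB)) with (dR' / (4 * (M2 + muB))) by (field; lra). subst w2; rmin_le. }
    apply mul_le_of_le_div in H0; lra. }
  clear Ew2.
  assert (Hh0' : 0 < H (1 / 2)) by (rewrite <- Eh0; exact Hh0).
  destruct (right_cons f2 H a2 w2 tau c' Hf2 HH Hh0' w2pos tau_pos)
    as (R0 & R1 & kR & mu & S & vb & HR0 & DR0 & DR1 & Rright & Rleft & Slo & Shi & muS & Hvb & RJ & RHz & RHb).
  rewrite <- Eh0 in Slo.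
  assert (B2 : forall s, a2 - w2 <= s <= a2 -> Rabs (Derive (Derive f2) s) <= M2).
  { intros s Hs. assert (Rabs (Derive (Derive f2) s - k2) < Rmin dR' 1) by (apply C6; apply abs_lt_i; lra).
    assert (Rmin dR' 1 <= 1) by apply Rmin_r. apply abs_lt_e in H0.
    apply abs_le_i. generalize (abs_le_e k2 (Rabs k2) (Rle_refl _)). lra. }
  specialize (Hvb M2 B2). rewrite <- Ed in Hvb. apply abs_le_e in Hvb.
  specialize (RHb M2 B2).
  assert (Spos : 0 < S) by (assert (0 < h0 * tau) by (apply Rmult_lt_0_compat; lra); lra).
  assert (muBd : Rabs mu <= muB).
  { subst muB. apply le_div_of_mul_le. apply Rmult_lt_0_compat; lra.
    assert (Rabs mu * S = Rabs (c' - vb)) by (rewrite <- muS, Rabs_mult, (Rabs_pos_eq S); lra).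
    assert (Rabs (c' - vb) <= c + 1 + Rabs d + M2).
    { apply abs_le_i. generalize (abs_le_e d (Rabs d) (Rle_refl _)). lra. }
    assert (Rabs mu * (h0 * tau / 2) <= Rabs mu * S) by (apply Rmult_le_compat_l; [apply Rabs_pos|lra]).
    lra. }
  assert (mu_lo : - (2 * mI / (25 * r2)) <= mu).
  { destruct (Rle_dec 0 mu) as [Hm|Hm].
    - assert (0 < 2 * mI / (25 * r2)) by (apply Rdiv_lt_0_compat; lra). lra.
    - assert (mu * S >= - (2 * eps_m)) by lra.
      assert (mu * S <= mu * (h0 * tau / 2)) by (apply Rmult_le_compat_neg_l; lra).
      assert (mu * (h0 * tau) >= - (4 * eps_m)) by lra.
      rewrite Eepsm in H2.
      assert ((mu + 2 * mI / (25 * r2)) * (h0 * tau) >= 0).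
      { replace ((mu + 2 * mI / (25 * r2)) * (h0 * tau)) with (mu * (h0 * tau) + 4 * (h0 * tau * mI / (50 * r2))) by (field; lra). lra. }
      assert (0 < h0 * tau) by (apply Rmult_lt_0_compat; lra).
      nra. }
  remember (a2 - w2 - tau) as e2 eqn:Ee2.
  assert (ZH : forall u, a2 - w2 <= u <= a2 -> Rabs (R0 u - r2) < dR' /\ Rabs (R1 u - d) < dR' /\
             Rabs (Derive (Derive f2) u - k2) < dR').
  { intros u Hu. destruct (RHb u Hu) as [RB1 RB2].
    assert (Rabs (f2 u - r2) < dR' / 2) by (apply C4; apply abs_lt_i; lra).
    assert (Rabs (Derive f2 u - d) < dR' / 2) by (apply C5; apply abs_lt_i; lra).
    assert (Rabs (Derive (Derive f2) u - k2) < Rmin dR' 1) by (apply C6; apply abs_lt_i; lra).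
    assert (Rmin dR' 1 <= dR') by apply Rmin_l.
    assert ((M2 + Rabs mu) * w2 <= dR' / 4) by (assert ((M2 + Rabs mu) * w2 <= (M2 + muB) * w2) by (apply Rmult_le_compat_r; lra); lra).
    assert ((M2 + Rabs mu) * w2 * w2 <= (M2 + Rabs mu) * w2) by (assert (0 <= (M2 + Rabs mu) * w2) by (apply Rmult_le_pos; generalize (Rabs_pos mu); lra); nra).
    split. assert (Rabs (R0 u - r2) < (M2 + Rabs mu) * w2 * w2 + dR' / 2) by (apply abs_tri3 with (f2 u); auto). lra.
    split. assert (Rabs (R1 u - d) < (M2 + Rabs mu) * w2 + dR' / 2) by (apply abs_tri3 with (Derive f2 u); auto). lra.
    lra. }
  remember (R1 (a2 - w2)) as vH eqn:EvH.
  assert (vHd : Rabs (vH - d) < dR') by (subst vH; apply ZH; lra).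
  assert (Vd : Rabs d + 1 <= V) by (generalize (Rabs_pos d); lra).
  assert (Slope : forall u, e2 <= u <= a2 -> Rabs (R1 u) <= V).
  { intros u Hu. destruct (Rle_dec u (a2 - w2)) as [Hu'|Hu'].
    - destruct (RJ u ltac:(lra)) as [j [_ [_ [_ Hm]]]].
      apply (minmax_abs c' vH); auto.
      apply abs_le_i. generalize (abs_le_e d (Rabs d) (Rle_refl _)). lra.
      apply abs_lt_e in vHd. apply abs_le_i. generalize (abs_le_e d (Rabs d) (Rle_refl _)). lra.
    - assert (Rabs (R1 u - d) < dR') by (apply ZH; lra). apply abs_lt_e in H0. apply abs_le_i.
      generalize (abs_le_e d (Rabs d) (Rle_refl _)). lra. }
  assert (R0a : R0 a2 = r2) by (rewrite Er2; apply Rright; lra).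
  assert (Val : forall u, e2 <= u <= a2 -> Rabs (R0 u - r2) < rho).
  { intros u Hu. rewrite <- R0a. rewrite Rabs_minus_sym.
    apply Rle_lt_trans with (V * (a2 - u)).
    apply (deriv_bound R0 R1); auto. lra. intros v Hv. apply Slope. lra.
    assert (V * (a2 - u) <= V * (2 * tau)) by (apply Rmult_le_compat_l; lra). lra. }
  assert (R0eb : Rabs (R0 e2 - r2) < rho) by (apply Val; lra).
  assert (CaseII : ~ 0 < 1 + G x r2 - d ^ 2 -> d < - c /\ GA < r2 * mu).
  { intros Hn. apply Rnot_lt_le in Hn. assert (Hdc : d < - c).
    { destruct (Rlt_dec d (- c)) as [Hl|Hl]; auto. apply Rnot_lt_le in Hl.
      assert (d ^ 2 <= c ^ 2).
      { assert (Rabs d <= c) by (apply abs_le_i; lra).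
        assert (d ^ 2 = Rabs d * Rabs d) by (rewrite <- Rabs_mult; simpl; rewrite Rmult_1_r; rewrite Rabs_pos_eq; [ring|apply Rle_0_sqr]).
        assert (0 <= Rabs d) by apply Rabs_pos.
        assert (Rabs d * Rabs d <= c * c) by (apply Rmult_le_compat; lra).
        simpl in *. lra. }
      lra. }
    split; auto.
    assert (c < mu * S) by (rewrite muS; lra).
    assert (0 < mu).
    { destruct (Rle_dec mu 0) as [Hm|Hm]; [|lra].
      assert (mu * S <= 0 * S) by (apply Rmult_le_compat_r; lra). lra. }
    assert (mu * S <= mu * (2 * tau)) by (apply Rmult_le_compat_l; lra).
    assert (r2 * c < r2 * (mu * (2 * tau))) by (apply Rmult_lt_compat_l; lra).
    assert (2 * GA * tau < 2 * (r2 * mu) * tau) by lra.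
    apply Rmult_lt_reg_r with (2 * tau). lra. lra. }
  remember (R0 e2) as R0e eqn:ER0e.
  assert (LbR : Lb < R0e) by (apply abs_lt_e in R0eb; lra).
  remember ((R0e - Lb) / c' + b1 - e2) as t eqn:Et.
  assert (Ht : c' * (t - b1 + e2) = R0e - Lb) by (rewrite Et; field; lra).
  remember (e2 + t) as T eqn:ET.
  assert (bT : b1 < T).
  { assert (0 < (R0e - Lb) / c') by (apply Rdiv_lt_0_compat; lra). lra. }
  assert (LineEq : forall s, b1 <= s <= T -> R0 (s - t) = L s /\ R1 (s - t) = L1 s /\ kR (s - t) = kL s).
  { intros s Hs. destruct (Rleft (s - t) ltac:(lra)) as [A1 [A2 A3]]. destruct (Lright s ltac:(lra)) as [B1' [B2' B3']].
    rewrite A1, A2, A3, B1', B2', B3'. split; [|split; reflexivity].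
    replace (R0e + c' * (s - t - e2)) with (R0e - c' * (t - b1 + e2) + c' * (s - b1)) by ring.
    rewrite Ht. ring. }
  set (f := fun s => if Rle_dec s b1 then L s else R0 (s - t)).
  assert (FLloc : forall s, s < T -> locally s (fun y => L y = f y)).
  { intros s Hs. apply locally_R. exists (T - s). split. lra. intros y Hy. apply abs_lt_e in Hy.
    unfold f. destruct (Rle_dec y b1). reflexivity. symmetry. apply LineEq. lra. }
  assert (FRloc : forall s, b1 < s -> locally s (fun y => R0 (y - t) = f y)).
  { intros s Hs. apply locally_R. exists (s - b1). split. lra. intros y Hy. apply abs_lt_e in Hy.
    unfold f. destruct (Rle_dec y b1). lra. reflexivity. }
  assert (DRt : forall s, is_derive (fun y => R0 (y - t)) s (R1 (s - t))) by (intros; apply isd_shift; auto).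
  assert (DR1t : forall s, is_derive (fun y => R1 (y - t)) s (kR (s - t))) by (intros; apply isd_shift; auto).
  assert (FL : forall s, s < T -> f s = L s /\ Derive f s = L1 s /\ Derive_n f 2 s = kL s).
  { intros s Hs. destruct (derivs_id L L1 kL s DL DL1) as [E1 E2].
    split. symmetry. exact (locally_singleton _ _ (FLloc s Hs)).
    split. rewrite <- E1. apply (Derive_n_ext_loc f L 1 s). apply filter_imp with (2 := FLloc s Hs). intros; auto.
    rewrite <- E2. apply (Derive_n_ext_loc f L 2 s). apply filter_imp with (2 := FLloc s Hs). intros; auto. }
  assert (FR : forall s, b1 < s -> f s = R0 (s - t) /\ Derive f s = R1 (s - t) /\ Derive_n f 2 s = kR (s - t)).
  { intros s Hs. destruct (derivs_id _ _ _ s DRt DR1t) as [E1 E2].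
    split. symmetry. exact (locally_singleton _ _ (FRloc s Hs)).
    split. rewrite <- E1. apply (Derive_n_ext_loc f _ 1 s). apply filter_imp with (2 := FRloc s Hs). intros; auto.
    rewrite <- E2. apply (Derive_n_ext_loc f _ 2 s). apply filter_imp with (2 := FRloc s Hs). intros; auto. }
  assert (Hfs : smooth f).
  { intros n s. destruct (Rlt_dec s T) as [Hs|Hs].
    - apply (ex_derive_n_ext_loc L f n s (FLloc s Hs)). apply HL.
    - apply (ex_derive_n_ext_loc _ f n s (FRloc s ltac:(lra))). apply smooth_shift, HR0. }
  assert (TT : T <= a2 - w2 + t) by lra.
  assert (Main : forall s, a1 <= s <= b2 + t -> 0 < f s /\ 0 < Phi x (f s) (Derive f s) (Derive_n f 2 s)).
  { intros s Hs.
    destruct (Rle_dec s (b1 - w1)) as [Z1|Z1].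
    { destruct (FL s ltac:(lra)) as [F0 [F1 F2]]. rewrite F0, F1, F2.
      destruct (Lleft s Z1) as [A [B C]]. rewrite A, B, C. split. apply Pf1; lra. apply Mf1'; lra. }
    destruct (Rle_dec s b1) as [Z2|Z2].
    { destruct (FL s ltac:(lra)) as [F0 [F1 F2]]. rewrite F0, F1, F2.
      destruct (Lzone s ltac:(lra)) as [h [Hh Hk]]. destruct (Zc s ltac:(lra)) as [Z1a [Z1b Z1c]].
      split. apply abs_lt_e in Z1a. lra.
      rewrite Hk, Phi_affine. apply conv_pos'; auto.
      apply N1; lra.
      apply N0; try lra. rewrite Rminus_0_r, Rabs_R0. lra. }
    destruct (Rlt_dec s T) as [Z3|Z3].
    { destruct (FL s Z3) as [F0 [F1 F2]]. rewrite F0, F1, F2.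
      destruct (Lright s ltac:(lra)) as [A [B C]]. rewrite A, B, C.
      assert (0 <= c' * (s - b1)) by (apply Rmult_le_pos; lra).
      split. lra.
      assert (Up : Lb + c' * (s - b1) < R0e).
      { assert (c' * (s - b1) < c' * (T - b1)) by (apply Rmult_lt_compat_l; lra).
        assert (c' * (T - b1) = R0e - Lb) by (rewrite <- Ht; rewrite ET; ring). lra. }
      remember (Lb + c' * (s - b1)) as r eqn:Er.
      destruct (Rle_dec r r1) as [Y1|Y1].
      { apply N0; try lra. apply abs_lt_i; lra. rewrite Rminus_0_r, Rabs_R0. lra. }
      destruct (Rle_dec r r2) as [Y2|Y2].
      { assert (0 < Phi x r1 c' 0) by (apply N0; [replace (r1 - r1) with 0 by ring; rewrite Rabs_R0; lra|lra|rewrite Rminus_0_r, Rabs_R0; lra]).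
        assert (G x r1 <= G x r) by (apply HG; lra).
        unfold Phi in *. lra. }
      assert (G x r2 - mI / 4 < G x r) by (apply GN; apply abs_lt_i; apply abs_lt_e in R0eb; lra).
      unfold Phi. lra. }
    assert (bs : b1 < s) by lra.
    destruct (FR s bs) as [F0 [F1 F2]]. rewrite F0, F1, F2.
    destruct (Rle_dec s (a2 + t)) as [Z5'|Z5'].
    2:{ destruct (Rright (s - t) ltac:(lra)) as [A [B C]]. rewrite A, B, C.
        split. apply Pf2; lra. apply Mf2'; lra. }
    remember (s - t) as u eqn:Eu.
    assert (Hu : e2 <= u <= a2) by lra.
    assert (Vu := Val u Hu). assert (Gu : G x r2 - mI / 4 < G x (R0 u)) by (apply GN; auto).
    apply abs_lt_e in Vu.
    split. lra.
    assert (Su := Slope u Hu).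
    assert (Sv : R1 u ^ 2 <= V ^ 2).
    { apply pow_maj_Rabs; exact Su. }
    destruct (Rle_dec s (a2 - w2 + t)) as [Z4|Z4].
    {
      destruct (RJ u ltac:(lra)) as [j [Hj [Hk [Hpos Hm]]]]. rewrite Hk.
      replace (Phi x (R0 u) (R1 u) (- mu * j)) with ((1 - R1 u ^ 2 + G x (R0 u)) + 2 * R0 u * mu * j) by (unfold Phi; ring).
      destruct (Rlt_dec 0 (1 + G x r2 - d ^ 2)) as [CI|CII].
      - assert (mdI := mImd CI).
        assert (v2 : R1 u ^ 2 <= 1 + G x r2 - mI / 2).
        { eapply Rle_trans. apply sq_between. exact Hm. apply Rmax_lub. lra.
          assert (E := sq_near vH d dR' vHd dRb). lra. }
        apply (PA1 mI r2); try lra.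
      - destruct (CaseII CII) as [Hdc HGA].
        assert (mupos : 0 < mu) by (apply (pos_of_mul_pos r2); lra).
        destruct (Hpos ltac:(lra)) as [P1 P2].
        destruct (Rle_dec (R1 u ^ 2) (1 + G x r2 - m1 / 2)) as [W1|W1].
        + assert (0 <= R0 u * mu * j) by (apply Rmult_le_pos; [apply Rmult_le_pos|]; lra). lra.
        + assert (Hv : R1 u < - c').
          { destruct (Rlt_dec (R1 u) (- c')) as [Y|Y]; auto. exfalso.
            assert (R1 u ^ 2 <= c' ^ 2) by (apply pow_maj_Rabs; apply abs_le_i; lra). lra. }
          assert (2 * GA < 2 * R0 u * mu * j) by (apply (PA2 tau r2 (R0 u) mu j c GA); lra).
          generalize (Rabs_pos (G x r2)) (abs_le_e (G x r2) _ (Rle_refl _)). lra. }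
    destruct (RHz u ltac:(lra)) as [h [Hh Hk]].
    destruct (ZH u ltac:(lra)) as [Za [Zb Zc']].
    rewrite Hk. replace (h * Derive (Derive f2) u - mu * (1 - h)) with (h * Derive (Derive f2) u + (1 - h) * (- mu)) by ring.
    rewrite Phi_comb. apply conv_pos; auto.
    apply NR; lra.
    replace (Phi x (R0 u) (R1 u) (- mu)) with ((1 - R1 u ^ 2 + G x (R0 u)) + 2 * R0 u * mu * 1) by (unfold Phi; ring).
    destruct (Rlt_dec 0 (1 + G x r2 - d ^ 2)) as [CI|CII].
    - assert (mdI := mImd CI).
      assert (E := sq_near (R1 u) d dR' Zb dRb).
      apply (PA1 mI r2); lra.
    - destruct (CaseII CII) as [Hdc HGA].
      assert (mupos : 0 < mu) by (apply (pos_of_mul_pos r2); lra).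
      assert (r2 * mu <= 2 * R0 u * mu) by (apply Rmult_le_compat_r; lra).
      generalize (Rabs_pos (G x r2)) (abs_le_e (G x r2) _ (Rle_refl _)). lra. }
  exists t. split. lra.
  exists f. split; [exact Hfs|].
  split. intros s Hs; apply Main; auto.
  split. intros s Hs. destruct (FL s ltac:(lra)) as [F0 _]. rewrite F0. apply Lleft. lra.
  split. intros s Hs. destruct (FR s ltac:(lra)) as [F0 _]. rewrite F0. apply Rright. lra.
  intros s Hs. destruct (Main s Hs). apply mu_pos_iff; auto.
Qed.
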